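(* Let $H$ be a quasitriangular Hopf algebra with universal R-matrix $\mathcal R=\mathcal R^{[1]}\otimes\mathcal R^{[2]}\in H\otimes H$, and let $H^*$ be a Hopf algebra in nondegenerate duality with $H$ (e.g. $H$ finite-dimensional). Let $D(H)$, the covariant algebra $\underline{H^*}$, the actions and the map $Q$ be as defined in the context. Then $Q:\underline{H^*}\to H$ is a map of covariant algebras: it is an algebra homomorphism from $\underline{H^*}$ to $H$, and for all $h\in H$, $a,b\in H^*$, $$Q\big((h\otimes a)\triangleright b\big)=(h\otimes a)\triangleright Q(b),$$ where on the left the action of $D(H)$ on $\underline{H^*}$ is used and on the right the action of $D(H)$ on $H$ is used.
   Context: Notation: $\Delta h=h_{(1)}\otimes h_{(2)}$ (Sweedler notation, with further indices for iterated coproducts), $S$ the antipode, $\langle\ ,\ \rangle$ the pairing between $H$ and $H^*$. For $x,y\in H^*$ write $\mathcal R(x, y)=\langle x,\mathcal R^{[1]}\rangle\langle y,\mathcal R^{[2]}\rangle$. The quantum double $D(H)=H\bowtie H^{*\mathrm{op}}$ is the Hopf algebra built on $H\otimes H^*$ with the tensor product coproduct, the Hopf structure of $H$ and of $H^{*\mathrm{op}}$ (the opposite product of $H^*$) on the two factors, and product $$(h\otimes a)(g\otimes b)=hg_{(2)}\otimes b\,a_{(2)}\,\langle g_{(1)},a_{(1)}\rangle\langle Sg_{(3)},a_{(3)}\rangle,\qquad h,g\in H,\ a,b\in H^*,$$ where $b\,a_{(2)}$ is the product in $H^*$. $D(H)$ acts on the algebra $H$ by $(h\otimes a)\triangleright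 \phi=\langle \phi_{(1)},a\rangle\, h_{(1)}\phi_{(2)}Sh_{(2)}$ for $\phi\in H$ (coproduct of $H$). The algebra $\underline{H^*}$ is the vector space $H^*$ with the product $a\,\underline{\cdot}\,b=a_{(2)}b_{(2)}\,\mathcal R\big((Sa_{(1)})a_{(3)}, Sb_{(1)}\big)$, and $D(H)$ acts on it by $$(h\otimes a)\triangleright b=b_{(3)}\,\langle h,(Sb_{(2)})b_{(4)}\rangle\,\mathcal R(a_{(1)},b_{(1)})\,\mathcal R(b_{(5)},a_{(2)}).$$ Let $\mathcal Q=\mathcal R_{21}\mathcal R=\mathcal Q^{[1]}\otimes\mathcal Q^{[2]}\in H\otimes H$ and define $Q:H^*\to H$ by $Q(a)=\langle a,\mathcal Q^{[1]}\rangle\mathcal Q^{[2]}$. A covariant system means a Hopf algebra acting on an algebra $A$ with $h\triangleright(ab)=(h_{(1)}\triangleright a)(h_{(2)}\triangleright b)$ and $h\triangleright 1=\epsilon(h)1$. *)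

(* Defs.v *)
(* Tensors V (x) W are represented by finite lists of pure tensors
   (Sweedler-style finite sums); two such lists denote the same tensor iff
   they agree under all pairs of linear functionals (which is exactly equality
   in V (x) W over a field). *)
From HB Require Import structures.
From mathcomp Require Import all_boot all_order all_algebra.
Set Implicit Arguments. Unset Strict Implicit. Unset Printing Implicit Defensive.
Import Order.TTheory GRing.Theory Num.Theory.
Local Open Scope ring_scope.

Section Defs.
Variable K : fieldType.

Definition lin_fun (V : lmodType K) (f : V -> K) : Prop :=
  forall (c : K) (x y : V), f (c *: x + y) = c * f x + f y.

Definition tens2_eq (V W : lmodType K) (t s : seq (V * W)) : Prop :=
  forall (f : V -> K) (g : W -> K), lin_fun f -> lin_fun g ->
    \sum_(p <- t) f p.1 * g p.2 = \sum_(p <- s) f p.1 * g p.2.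

Definition tens3_eq (U V W : lmodType K) (t s : seq (U * V * W)) : Prop :=
  forall (f : U -> K) (g : V -> K) (k : W -> K),
    lin_fun f -> lin_fun g -> lin_fun k ->
    \sum_(p <- t) f p.1.1 * g p.1.2 * k p.2 =
    \sum_(p <- s) f p.1.1 * g p.1.2 * k p.2.

Record hopf_data (A : algType K) := HopfData {
  cop : A -> seq (A * A);
  cou : A -> K;
  ant : A -> A }.

Definition is_hopf (A : algType K) (X : hopf_data A) : Prop :=
  let d := cop X in let e := cou X in let S := ant X in
  [/\
      [/\ (forall c x y, tens2_eq (d (c *: x + y))
                       ([seq (c *: p.1, p.2) | p <- d x] ++ d y)),
      (forall x y, tens2_eq (d (x * y))
                       [seq (p.1 * q.1, p.2 * q.2) | p <- d x, q <- d y]),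
      tens2_eq (d 1) [:: (1, 1)] &
      (forall x, tens3_eq [seq (q.1, q.2, p.2) | p <- d x, q <- d p.1]
                          [seq (p.1, q.1, q.2) | p <- d x, q <- d p.2])],
      [/\ (forall c x y, e (c *: x + y) = c * e x + e y),
          (forall x y, e (x * y) = e x * e y),
          e 1 = 1 &
          (forall x, \sum_(p <- d x) e p.1 *: p.2 = x /\
                     \sum_(p <- d x) e p.2 *: p.1 = x)] &
      [/\
      (forall c x y, S (c *: x + y) = c *: S x + S y),
      (forall x, \sum_(p <- d x) S p.1 * p.2 = e x *: 1) &
      (forall x, \sum_(p <- d x) p.1 * S p.2 = e x *: 1)]].

Definition is_dual_pairing (H Hs : algType K) (XH : hopf_data H)
    (XHs : hopf_data Hs) (pr : H -> Hs -> K) : Prop :=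
  [/\ (forall c x y a, pr (c *: x + y) a = c * pr x a + pr y a) /\
      (forall c x a b, pr x (c *: a + b) = c * pr x a + pr x b),
      (forall x y a, pr (x * y) a = \sum_(p <- cop XHs a) pr x p.1 * pr y p.2),
      (forall x a b, pr x (a * b) = \sum_(p <- cop XH x) pr p.1 a * pr p.2 b),
      (forall a, pr 1 a = cou XHs a) /\ (forall x, pr x 1 = cou XH x) &
      [/\ (forall x a, pr (ant XH x) a = pr x (ant XHs a)),
          (forall x, (forall a, pr x a = 0) -> x = 0) &
          (forall a, (forall x, pr x a = 0) -> a = 0)]].

(* R in H (x) H is a universal R-matrix (Majid's conventions) *)
Definition is_quasitriangular (H : algType K) (X : hopf_data H)
    (R : seq (H * H)) : Prop :=
  let d := cop X in
  [/\ exists Rinv : seq (H * H),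
        [/\ tens2_eq [seq (p.1 * q.1, p.2 * q.2) | p <- R, q <- Rinv] [:: (1, 1)],
            tens2_eq [seq (q.1 * p.1, q.2 * p.2) | p <- R, q <- Rinv] [:: (1, 1)] &
            forall x, tens2_eq [seq (p.2, p.1) | p <- d x]
              [seq (r.1 * ps.1.1 * ps.2.1, r.2 * ps.1.2 * ps.2.2)
                 | r <- R, ps <- [seq (p, s) | p <- d x, s <- Rinv]]],
      tens3_eq [seq (q.1, q.2, p.2) | p <- R, q <- d p.1]
               [seq (r.1, s.1, r.2 * s.2) | r <- R, s <- R] &
      tens3_eq [seq (p.1, q.1, q.2) | p <- R, q <- d p.2]
               [seq (r.1 * s.1, s.2, r.2) | r <- R, s <- R]].

(* iterated coproduct: iterc d n x lists the (n+1)-tuples x(1),...,x(n+1) *)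
Fixpoint iterc (A : Type) (d : A -> seq (A * A)) (n : nat) (x : A)
    : seq (seq A) :=
  match n with
  | 0 => [:: [:: x]]
  | n'.+1 => flatten [seq [seq p.1 :: l | l <- iterc d n' p.2] | p <- d x]
  end.

Section Ops.
Variables (H Hs : algType K) (XH : hopf_data H) (XHs : hopf_data Hs).
Variables (pr : H -> Hs -> K) (R : seq (H * H)).

Definition Rform (x y : Hs) : K := \sum_(r <- R) pr r.1 x * pr r.2 y.

(* product of the covariant algebra underline(H^* ):
   a . b = a(2) b(2) R((S a(1)) a(3), S b(1)) *)
Definition umul (a b : Hs) : Hs :=
  \sum_(l <- iterc (cop XHs) 2 a) \sum_(q <- cop XHs b)
     Rform (ant XHs l`_0 * l`_2) (ant XHs q.1) *: (l`_1 * q.2).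

(* action of h (x) a in D(H) on underline(H^* ):
   b(3) <h, (S b(2)) b(4)> R(a(1), b(1)) R(b(5), a(2)) *)
Definition act_Hs (h : H) (a b : Hs) : Hs :=
  \sum_(l <- iterc (cop XHs) 4 b) \sum_(m <- cop XHs a)
     (pr h (ant XHs l`_1 * l`_3) * Rform m.1 l`_0 * Rform l`_4 m.2) *: l`_2.

(* action of h (x) a in D(H) on H: <phi(1), a> h(1) phi(2) S h(2) *)
Definition act_H (h : H) (a : Hs) (phi : H) : H :=
  \sum_(p <- cop XH phi) \sum_(q <- cop XH h)
     pr p.1 a *: (q.1 * p.2 * ant XH q.2).

(* Q(a) = <a, Q^[1]> Q^[2] with Q = R21 R = R^[2] S^[1] (x) R^[1] S^[2] *)
Definition Qmap (a : Hs) : H :=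
  \sum_(r <- R) \sum_(s <- R) pr (r.2 * s.1) a *: (r.1 * s.2).

End Ops.
End Defs.

(* Main.v *)
Require Import Defs.
From HB Require Import structures.
From mathcomp Require Import all_boot all_order all_algebra.
From mathcomp Require Import ring.
Set Implicit Arguments. Unset Strict Implicit. Unset Printing Implicit Defensive.
Import GRing.Theory.
Local Open Scope ring_scope.

Section Shuffle.
Variable V : zmodType.
Lemma sum_swap_in I J L (A : seq I) (B : I -> seq J) (C : seq L) (F : I -> J -> L -> V) :
  \sum_(a <- A) \sum_(b <- B a) \sum_(c <- C) F a b c =
  \sum_(a <- A) \sum_(c <- C) \sum_(b <- B a) F a b c.
Proof. by apply: eq_bigr => a _; rewrite exchange_big. Qed.
Lemma sum_swap22 I J L M (A : seq I) (B : I -> seq J) (C : seq L) (E : L -> seq M)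
   (F : I -> J -> L -> M -> V) :
  \sum_(a <- A) \sum_(b <- B a) \sum_(c <- C) \sum_(e <- E c) F a b c e =
  \sum_(c <- C) \sum_(e <- E c) \sum_(a <- A) \sum_(b <- B a) F a b c e.
Proof.
transitivity (\sum_(a <- A) \sum_(c <- C) \sum_(e <- E c) \sum_(b <- B a) F a b c e).
  apply: eq_bigr => a _; rewrite exchange_big; apply: eq_bigr => c _; exact: exchange_big.
by rewrite exchange_big; apply: eq_bigr => c _; rewrite exchange_big.
Qed.
Lemma sum_interleave I J L M (A : seq I) (B : I -> seq J) (C : seq L) (E : L -> seq M)
   (F : I -> J -> L -> M -> V) :
  \sum_(a <- A) \sum_(c <- C) \sum_(b <- B a) \sum_(e <- E c) F a b c e =
  \sum_(a <- A) \sum_(b <- B a) \sum_(c <- C) \sum_(e <- E c) F a b c e.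
Proof. by apply: eq_bigr => a _; rewrite exchange_big. Qed.
Lemma sum_exch I J (A : seq I) (B : seq J) (F : I -> J -> V) :
  \sum_(a <- A) \sum_(b <- B) F a b = \sum_(b <- B) \sum_(a <- A) F a b.
Proof. exact: exchange_big. Qed.
Lemma sum_rot3 I J L (A : seq I) (B : seq J) (C : seq L) (F : I -> J -> L -> V) :
  \sum_(a <- A) \sum_(b <- B) \sum_(c <- C) F a b c = \sum_(c <- C) \sum_(a <- A) \sum_(b <- B) F a b c.
Proof.
transitivity (\sum_(a <- A) \sum_(c <- C) \sum_(b <- B) F a b c).
  by apply: eq_bigr => a _; rewrite sum_exch.
by rewrite sum_exch.
Qed.
Lemma sum_in3 X I J L (A : seq X) (B : seq I) (C : I -> seq J) (D : seq L) (F : X -> I -> J -> L -> V) :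
  \sum_(x <- A) \sum_(b <- B) \sum_(c <- C b) \sum_(e <- D) F x b c e =
  \sum_(b <- B) \sum_(c <- C b) \sum_(e <- D) \sum_(x <- A) F x b c e.
Proof.
rewrite sum_exch; apply: eq_bigr => b _; rewrite sum_exch; apply: eq_bigr => c _; exact: sum_exch.
Qed.
Lemma sum_swap33 I1 I2 I3 J1 J2 J3 (A : seq I1) (B : I1 -> seq I2) (C : seq I3)
   (D : seq J1) (E : J1 -> seq J2) (G : seq J3) (F : I1 -> I2 -> I3 -> J1 -> J2 -> J3 -> V) :
  \sum_(a <- A) \sum_(b <- B a) \sum_(c <- C) \sum_(x <- D) \sum_(y <- E x) \sum_(z <- G) F a b c x y z =
  \sum_(x <- D) \sum_(y <- E x) \sum_(z <- G) \sum_(a <- A) \sum_(b <- B a) \sum_(c <- C) F a b c x y z.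
Proof.
transitivity (\sum_(a <- A) \sum_(b <- B a) \sum_(x <- D) \sum_(y <- E x) \sum_(z <- G) \sum_(c <- C) F a b c x y z).
  by apply: eq_bigr => a _; apply: eq_bigr => b _; rewrite sum_in3.
transitivity (\sum_(a <- A) \sum_(x <- D) \sum_(y <- E x) \sum_(z <- G) \sum_(b <- B a) \sum_(c <- C) F a b c x y z).
  by apply: eq_bigr => a _; rewrite sum_in3.
by rewrite sum_in3.
Qed.
Lemma sum_in5 X I1 I2 I3 I4 I5 (A : seq X) (B1 : seq I1) (B2 : I1 -> seq I2) (B3 : I2 -> seq I3)
   (B4 : I3 -> seq I4) (B5 : seq I5) (F : X -> I1 -> I2 -> I3 -> I4 -> I5 -> V) :
  \sum_(x <- A) \sum_(p1 <- B1) \sum_(p2 <- B2 p1) \sum_(p3 <- B3 p2) \sum_(p4 <- B4 p3) \sum_(m <- B5)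
     F x p1 p2 p3 p4 m =
  \sum_(p1 <- B1) \sum_(p2 <- B2 p1) \sum_(p3 <- B3 p2) \sum_(p4 <- B4 p3) \sum_(m <- B5) \sum_(x <- A)
     F x p1 p2 p3 p4 m.
Proof.
rewrite sum_exch; apply: eq_bigr => p1 _; rewrite sum_exch; apply: eq_bigr => p2 _.
rewrite sum_exch; apply: eq_bigr => p3 _; rewrite sum_exch; apply: eq_bigr => p4 _; exact: sum_exch.
Qed.
Lemma sum_last_first3 I J L M (A : seq I) (B : seq J) (C : seq L) (E : seq M) (F : I -> J -> L -> M -> V) :
  \sum_(a <- A) \sum_(b <- B) \sum_(c <- C) \sum_(e <- E) F a b c e =
  \sum_(e <- E) \sum_(a <- A) \sum_(b <- B) \sum_(c <- C) F a b c e.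
Proof.
transitivity (\sum_(a <- A) \sum_(e <- E) \sum_(b <- B) \sum_(c <- C) F a b c e).
  by apply: eq_bigr => a _; rewrite sum_rot3.
by rewrite sum_exch.
Qed.
End Shuffle.

Lemma iterc_S (A : Type) (V : nmodType) (dd : A -> seq (A * A)) n x (F : seq A -> V) :
  \sum_(l <- iterc dd n.+1 x) F l = \sum_(p <- dd x) \sum_(l <- iterc dd n p.2) F (p.1 :: l).
Proof.
rewrite /= big_flatten big_map; apply: eq_bigr => p _; by rewrite big_map.
Qed.
Lemma iterc_0 (A : Type) (V : nmodType) (dd : A -> seq (A * A)) x (F : seq A -> V) :
  \sum_(l <- iterc dd 0 x) F l = F [:: x].
Proof. by rewrite /= big_seq1. Qed.


Section Pf.
Variable K : fieldType.
Variables (H Hs : algType K) (XH : hopf_data H) (XHs : hopf_data Hs).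
Variables (pr : H -> Hs -> K) (R : seq (H * H)).
Hypotheses (hH : is_hopf XH) (hHs : is_hopf XHs) (hP : is_dual_pairing XH XHs pr)
  (hQ : is_quasitriangular XH R).
Variable Ri : seq (H * H).
Hypothesis hRi :
  [/\ tens2_eq [seq (p.1 * q.1, p.2 * q.2) | p <- R, q <- Ri] [:: (1, 1)],
      tens2_eq [seq (q.1 * p.1, q.2 * p.2) | p <- R, q <- Ri] [:: (1, 1)] &
      forall x, tens2_eq [seq (p.2, p.1) | p <- cop XH x]
        [seq (r.1 * ps.1.1 * ps.2.1, r.2 * ps.1.2 * ps.2.2)
           | r <- R, ps <- [seq (p, s) | p <- cop XH x, s <- Ri]]].

Local Notation d := (cop XH).
Local Notation e := (cou XH).
Local Notation S := (ant XH).
Local Notation ds := (cop XHs).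
Local Notation es := (cou XHs).
Local Notation Ss := (ant XHs).

Lemma prDl c x y a : pr (c *: x + y) a = c * pr x a + pr y a.
Proof. by case: hP => [[]]. Qed.
Lemma prDr c x a b : pr x (c *: a + b) = c * pr x a + pr x b.
Proof. by case: hP => [[]]. Qed.
Lemma pr0l a : pr 0 a = 0.
Proof. have h := prDl 1 0 0 a; rewrite scaler0 addr0 mul1r in h. by apply: (@addrI _ (pr 0 a)); rewrite addr0 -h. Qed.
Lemma pr0r x : pr x 0 = 0.
Proof. have h := prDr 1 x 0 0; rewrite scaler0 addr0 mul1r in h. by apply: (@addrI _ (pr x 0)); rewrite addr0 -h. Qed.
Lemma prZl c x a : pr (c *: x) a = c * pr x a.
Proof. by rewrite -[c *: x]addr0 prDl pr0l addr0. Qed.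
Lemma prZr c x a : pr x (c *: a) = c * pr x a.
Proof. by rewrite -[c *: a]addr0 prDr pr0r addr0. Qed.
Lemma prAl x y a : pr (x + y) a = pr x a + pr y a.
Proof. by rewrite -[x]scale1r prDl mul1r scale1r. Qed.
Lemma prAr x a b : pr x (a + b) = pr x a + pr x b.
Proof. by rewrite -[a]scale1r prDr mul1r scale1r. Qed.
Lemma pr_suml I (L : seq I) (F : I -> H) a :
  pr (\sum_(i <- L) F i) a = \sum_(i <- L) pr (F i) a.
Proof. elim: L => [|i L IH]; first by rewrite !big_nil pr0l. by rewrite !big_cons prAl IH. Qed.
Lemma pr_sumr I (L : seq I) (F : I -> Hs) x :
  pr x (\sum_(i <- L) F i) = \sum_(i <- L) pr x (F i).
Proof. elim: L => [|i L IH]; first by rewrite !big_nil pr0r. by rewrite !big_cons prAr IH. Qed.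
Lemma prM x y a : pr (x * y) a = \sum_(p <- ds a) pr x p.1 * pr y p.2.
Proof. by case: hP. Qed.
Lemma prMs x a b : pr x (a * b) = \sum_(p <- d x) pr p.1 a * pr p.2 b.
Proof. by case: hP. Qed.
Lemma pr1l a : pr 1 a = es a. Proof. by case: hP => _ _ _ []. Qed.
Lemma pr1r x : pr x 1 = e x. Proof. by case: hP => _ _ _ []. Qed.
Lemma prS x a : pr (S x) a = pr x (Ss a). Proof. by case: hP => _ _ _ _ []. Qed.
Lemma eqH x y : (forall a, pr x a = pr y a) -> x = y.
Proof.
move=> E; case: hP => _ _ _ _ [_ nd _]; apply/eqP; rewrite -subr_eq0; apply/eqP/nd => a.
by rewrite -scaleN1r addrC prDl E mulN1r addNr.
Qed.
Lemma eqHs a b : (forall x, pr x a = pr x b) -> a = b.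
Proof.
move=> E; case: hP => _ _ _ _ [_ _ nd]; apply/eqP; rewrite -subr_eq0; apply/eqP/nd => x.
by rewrite -scaleN1r addrC prDr E mulN1r addNr.
Qed.


Lemma linP (V : lmodType K) (f : V -> K) : lin_fun f ->
  [/\ f 0 = 0, forall c x, f (c *: x) = c * f x & forall x y, f (x + y) = f x + f y].
Proof.
move=> hf; have f0 : f 0 = 0.
  have h := hf 1 0 0; rewrite scaler0 addr0 mul1r in h.
  by apply: (@addrI _ (f 0)); rewrite addr0 -h.
split=> // [c x|x y]; first by rewrite -[c *: x]addr0 hf f0 addr0.
by rewrite -[x]scale1r hf mul1r scale1r.
Qed.

Lemma lin_sum (V : lmodType K) (f : V -> K) I (L : seq I) F : lin_fun f ->
  f (\sum_(i <- L) F i) = \sum_(i <- L) f (F i).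
Proof.
move=> /linP[f0 _ fD]; elim: L => [|i L IH]; first by rewrite !big_nil.
by rewrite !big_cons fD IH.
Qed.

Lemma dlin c x y f g : lin_fun f -> lin_fun g ->
  \sum_(p <- d (c *: x + y)) f p.1 * g p.2 =
  c * \sum_(p <- d x) f p.1 * g p.2 + \sum_(p <- d y) f p.1 * g p.2.
Proof.
move=> hf hg; case: hH => [[h _ _ _] _ _]; rewrite (h c x y f g hf hg) big_cat big_map /=.
case/linP: hf => _ fZ _; rewrite mulr_sumr; congr (_ + _); apply: eq_bigr => p _.
by rewrite fZ mulrA.
Qed.

Lemma dmul x y f g : lin_fun f -> lin_fun g ->
  \sum_(p <- d (x * y)) f p.1 * g p.2 =
  \sum_(p <- d x) \sum_(q <- d y) f (p.1 * q.1) * g (p.2 * q.2).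
Proof.
by move=> hf hg; case: hH => [[_ h _ _] _ _]; rewrite (h x y f g hf hg) big_allpairs_dep.
Qed.

Lemma d1 f g : lin_fun f -> lin_fun g ->
  \sum_(p <- d 1) f p.1 * g p.2 = f 1 * g 1.
Proof. by move=> hf hg; case: hH => [[_ _ h _] _ _]; rewrite (h f g hf hg) big_seq1. Qed.

Lemma coass x f g k : lin_fun f -> lin_fun g -> lin_fun k ->
  \sum_(p <- d x) \sum_(q <- d p.1) f q.1 * g q.2 * k p.2 =
  \sum_(p <- d x) \sum_(q <- d p.2) f p.1 * g q.1 * k q.2.
Proof.
move=> hf hg hk; case: hH => [[_ _ _ h] _ _].
by have := h x f g k hf hg hk; rewrite !big_allpairs_dep.
Qed.

Lemma elin c x y : e (c *: x + y) = c * e x + e y.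
Proof. by case: hH => [_ [h _ _ _] _]. Qed.
Lemma emul x y : e (x * y) = e x * e y.
Proof. by case: hH => [_ [_ h _ _] _]. Qed.
Lemma e1 : e 1 = 1.
Proof. by case: hH => [_ [_ _ h _] _]. Qed.
Lemma counitL x : \sum_(p <- d x) e p.1 *: p.2 = x.
Proof. by case: hH => [_ [_ _ _ h] _]; case: (h x). Qed.
Lemma counitR x : \sum_(p <- d x) e p.2 *: p.1 = x.
Proof. by case: hH => [_ [_ _ _ h] _]; case: (h x). Qed.
Lemma Slin c x y : S (c *: x + y) = c *: S x + S y.
Proof. by case: hH => [_ _ [h _ _]]. Qed.
Lemma antL x : \sum_(p <- d x) S p.1 * p.2 = e x *: 1.
Proof. by case: hH => [_ _ [_ h _]]. Qed.
Lemma antR x : \sum_(p <- d x) p.1 * S p.2 = e x *: 1.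
Proof. by case: hH => [_ _ [_ _ h]]. Qed.

Lemma esmul a b : es (a * b) = es a * es b.
Proof. by case: hHs => [_ [_ h _ _] _]. Qed.
Lemma es1 : es 1 = 1.
Proof. by case: hHs => [_ [_ _ h _] _]. Qed.
Lemma elins c x y : es (c *: x + y) = c * es x + es y.
Proof. by case: hHs => [_ [h _ _ _] _]. Qed.
Lemma counitLs a : \sum_(p <- ds a) es p.1 *: p.2 = a.
Proof. by case: hHs => [_ [_ _ _ h] _]; case: (h a). Qed.
Lemma counitRs a : \sum_(p <- ds a) es p.2 *: p.1 = a.
Proof. by case: hHs => [_ [_ _ _ h] _]; case: (h a). Qed.
Lemma antLs a : \sum_(p <- ds a) Ss p.1 * p.2 = es a *: 1.
Proof. by case: hHs => [_ _ [_ h _]]. Qed.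
Lemma antRs a : \sum_(p <- ds a) p.1 * Ss p.2 = es a *: 1.
Proof. by case: hHs => [_ _ [_ _ h]]. Qed.

Lemma QTa f g k : lin_fun f -> lin_fun g -> lin_fun k ->
  \sum_(p <- R) \sum_(q <- d p.1) f q.1 * g q.2 * k p.2 =
  \sum_(r <- R) \sum_(s <- R) f r.1 * g s.1 * k (r.2 * s.2).
Proof.
move=> hf hg hk; case: hQ => _ h _.
by have := h f g k hf hg hk; rewrite !big_allpairs_dep.
Qed.

Lemma QTb f g k : lin_fun f -> lin_fun g -> lin_fun k ->
  \sum_(p <- R) \sum_(q <- d p.2) f p.1 * g q.1 * k q.2 =
  \sum_(r <- R) \sum_(s <- R) f (r.1 * s.1) * g s.2 * k r.2.
Proof.
move=> hf hg hk; case: hQ => _ _ h.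
by have := h f g k hf hg hk; rewrite !big_allpairs_dep.
Qed.

Lemma RRi f g : lin_fun f -> lin_fun g ->
  \sum_(r <- R) \sum_(q <- Ri) f (r.1 * q.1) * g (r.2 * q.2) = f 1 * g 1.
Proof. by move=> hf hg; case: hRi => h1 _ _; have := h1 f g hf hg; rewrite big_allpairs_dep big_seq1. Qed.
Lemma RiR f g : lin_fun f -> lin_fun g ->
  \sum_(r <- R) \sum_(q <- Ri) f (q.1 * r.1) * g (q.2 * r.2) = f 1 * g 1.
Proof. by move=> hf hg; case: hRi => _ h2 _; have := h2 f g hf hg; rewrite big_allpairs_dep big_seq1. Qed.
Lemma QTc x f g : lin_fun f -> lin_fun g ->
  \sum_(p <- d x) f p.2 * g p.1 =
  \sum_(r <- R) \sum_(p <- d x) \sum_(q <- Ri) f (r.1 * p.1 * q.1) * g (r.2 * p.2 * q.2).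
Proof.
move=> hf hg; case: hRi => _ _ h3; have := h3 x f g hf hg; rewrite big_map big_allpairs_dep => ->.
by apply: eq_bigr => r _; rewrite big_allpairs_dep.
Qed.


Lemma sAr (k : K) (x y : H) : x * (k *: y) = k *: (x * y). Proof. by rewrite scalerAr. Qed.
Lemma sAl (k : K) (x y : H) : (k *: x) * y = k *: (x * y). Proof. by rewrite scalerAl. Qed.

Ltac lin_tac := let c := fresh "c" in let x := fresh "x" in let y := fresh "y" in
  move=> c x y /=; rewrite ?Slin ?elin ?(mulrDr, mulrDl, sAr, sAl) ?prDl; ring.

Lemma lin_test A B a C : lin_fun (fun x => C * pr (A * S x * B) a).
Proof. lin_tac. Qed.

Inductive dec2 : (H -> H -> K) -> Prop :=
  | Dec2 f g : lin_fun f -> lin_fun g -> dec2 (fun x y => f x * g y)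
  | Dec2add F G : dec2 F -> dec2 G -> dec2 (fun x y => F x y + G x y)
  | Dec2zero : dec2 (fun _ _ => 0)
  | Dec2ext F G : (forall x y, F x y = G x y) -> dec2 G -> dec2 F.

Inductive dec3 : (H -> H -> H -> K) -> Prop :=
  | Dec3 f g k : lin_fun f -> lin_fun g -> lin_fun k -> dec3 (fun x y z => f x * g y * k z)
  | Dec3add F G : dec3 F -> dec3 G -> dec3 (fun x y z => F x y z + G x y z)
  | Dec3zero : dec3 (fun _ _ _ => 0)
  | Dec3ext F G : (forall x y z, F x y z = G x y z) -> dec3 G -> dec3 F.

Lemma dec2_sum I (L : seq I) (F : I -> H -> H -> K) :
  (forall i, dec2 (F i)) -> dec2 (fun x y => \sum_(i <- L) F i x y).
Proof.
move=> hF; elim: L => [|i L IH].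
  by apply: (Dec2ext _ Dec2zero) => x y; rewrite big_nil.
by apply: (Dec2ext _ (Dec2add (hF i) IH)) => x y; rewrite big_cons.
Qed.

Lemma dec3_sum I (L : seq I) (F : I -> H -> H -> H -> K) :
  (forall i, dec3 (F i)) -> dec3 (fun x y z => \sum_(i <- L) F i x y z).
Proof.
move=> hF; elim: L => [|i L IH].
  by apply: (Dec3ext _ Dec3zero) => x y z; rewrite big_nil.
by apply: (Dec3ext _ (Dec3add (hF i) IH)) => x y z; rewrite big_cons.
Qed.

Lemma dec2_use F t s : dec2 F -> tens2_eq t s ->
  \sum_(p <- t) F p.1 p.2 = \sum_(p <- s) F p.1 p.2.
Proof.
move=> hF E; elim: hF => {F} [f g hf hg|F G _ IF _ IG| |F G FG _ IG].
- exact: E.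
- by rewrite !big_split /= IF IG.
- by rewrite !big1.
- by rewrite (eq_bigr _ (fun p _ => FG p.1 p.2)) IG; apply: eq_bigr => p _; rewrite FG.
Qed.

Lemma dec3_use F t s : dec3 F -> tens3_eq t s ->
  \sum_(p <- t) F p.1.1 p.1.2 p.2 = \sum_(p <- s) F p.1.1 p.1.2 p.2.
Proof.
move=> hF E; elim: hF => {F} [f g k hf hg hk|F G _ IF _ IG| |F G FG _ IG].
- exact: E.
- by rewrite !big_split /= IF IG.
- by rewrite !big1.
- by rewrite (eq_bigr _ (fun p _ => FG p.1.1 p.1.2 p.2)) IG; apply: eq_bigr => p _; rewrite FG.
Qed.

Lemma dec3_21 F k : dec2 F -> lin_fun k -> dec3 (fun x y z => F x y * k z).
Proof.
move=> hF hk; elim: hF => {F} [f g hf hg|F G _ IF _ IG| |F G FG _ IG].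
- exact: Dec3.
- by apply: (Dec3ext _ (Dec3add IF IG)) => x y z; rewrite mulrDl.
- by apply: (Dec3ext _ Dec3zero) => x y z; rewrite mul0r.
- by apply: (Dec3ext _ IG) => x y z; rewrite FG.
Qed.

Lemma dec3_12 f G : lin_fun f -> dec2 G -> dec3 (fun x y z => f x * G y z).
Proof.
move=> hf hG; elim: hG => {G} [g k hg hk|F G _ IF _ IG| |F G FG _ IG].
- by apply: (Dec3ext _ (Dec3 hf hg hk)) => x y z; rewrite mulrA.
- by apply: (Dec3ext _ (Dec3add IF IG)) => x y z; rewrite mulrDr.
- by apply: (Dec3ext _ Dec3zero) => x y z; rewrite mulr0.
- by apply: (Dec3ext _ IG) => x y z; rewrite FG.
Qed.

Lemma dec3_13 F g : dec2 F -> lin_fun g -> dec3 (fun x y z => F x z * g y).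
Proof.
move=> hF hg; elim: hF => {F} [f k hf hk|F G _ IF _ IG| |F G FG _ IG].
- by apply: (Dec3ext _ (Dec3 hf hg hk)) => x y z; rewrite mulrAC.
- by apply: (Dec3ext _ (Dec3add IF IG)) => x y z; rewrite mulrDl.
- by apply: (Dec3ext _ Dec3zero) => x y z; rewrite mul0r.
- by apply: (Dec3ext _ IG) => x y z; rewrite FG.
Qed.

Definition linmap (L : H -> H) := forall c x y, L (c *: x + y) = c *: L x + L y.

Lemma lin_pr (L : H -> H) a : linmap L -> lin_fun (fun x => pr (L x) a).
Proof. by move=> hL c x y /=; rewrite hL prDl. Qed.

Lemma dec2_pr (L1 L2 : H -> H) a : linmap L1 -> linmap L2 ->
  dec2 (fun x y => pr (L1 x * L2 y) a).
Proof.
move=> h1 h2; apply: (Dec2ext (fun x y => prM _ _ _)).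
by apply: dec2_sum => p; apply: Dec2; apply: lin_pr.
Qed.

Lemma dec2_scal c F : dec2 F -> dec2 (fun x y => c * F x y).
Proof.
elim=> {F} [f g hf hg|F G _ IF _ IG| |F G FG _ IG].
- apply: (Dec2ext _ (Dec2 (f := fun x => c * f x) _ hg)) => [x y|]; first by rewrite mulrA.
  by move=> a x y; rewrite hf; ring.
- by apply: (Dec2ext _ (Dec2add IF IG)) => x y; rewrite mulrDr.
- by apply: (Dec2ext _ Dec2zero) => x y; rewrite mulr0.
- by apply: (Dec2ext _ IG) => x y; rewrite FG.
Qed.

Ltac linmap_tac := let c := fresh "c" in let x := fresh "x" in let y := fresh "y" in
  move=> c x y /=; rewrite ?(Slin, mulrDr, mulrDl, sAr, sAl) //.

Lemma linmap_test A B : linmap (fun x => A * S x * B).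
Proof. linmap_tac. Qed.

Lemma lin_e : lin_fun e. Proof. exact: elin. Qed.
Lemma lin_p a : lin_fun (fun x => pr x a). Proof. by move=> c x y; rewrite prDl. Qed.

Lemma e_sum I (L : seq I) F : e (\sum_(i <- L) F i) = \sum_(i <- L) e (F i).
Proof. exact: lin_sum lin_e. Qed.
Lemma eZ c x : e (c *: x) = c * e x.
Proof. by case/linP: lin_e. Qed.

Lemma e_counit x : \sum_(q <- d x) e q.1 * e q.2 = e x.
Proof. by rewrite -[in RHS](counitL x) e_sum; apply: eq_bigr => q _; rewrite eZ. Qed.

Lemma sum_mulss I J (L1 : seq I) (L2 : seq J) (c1 : I -> K) (c2 : J -> K) (F : I -> H) (G : J -> H) :
  (\sum_(i <- L1) c1 i *: F i) * (\sum_(j <- L2) c2 j *: G j) =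
  \sum_(i <- L1) \sum_(j <- L2) (c1 i * c2 j) *: (F i * G j).
Proof.
rewrite mulr_suml; apply: eq_bigr => i _; rewrite mulr_sumr; apply: eq_bigr => j _.
by rewrite sAl sAr scalerA.
Qed.

Lemma pr_dsum I J (L1 : seq I) (L2 : seq J) (c : I -> J -> K) (F : I -> J -> H) a :
  pr (\sum_(i <- L1) \sum_(j <- L2) c i j *: F i j) a =
  \sum_(i <- L1) \sum_(j <- L2) c i j * pr (F i j) a.
Proof. rewrite pr_suml; apply: eq_bigr => i _; rewrite pr_suml; apply: eq_bigr => j _; exact: prZl. Qed.

Lemma u_one : \sum_(r <- R) e r.1 *: r.2 = 1.
Proof.
set u := \sum_(r <- R) _.
have uu : u * u = u.
  apply: eqH => c; have := QTa lin_e lin_e (lin_p c).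
  under eq_bigr => p _ do rewrite -big_distrl /= e_counit.
  rewrite /u sum_mulss pr_dsum => <-; rewrite pr_suml; apply: eq_bigr => p _.
  by rewrite prZl.
set u' := \sum_(q <- Ri) e q.1 *: q.2.
have uu' : u * u' = 1.
  apply: eqH => c; have := RRi lin_e (lin_p c); rewrite e1 mul1r => <-.
  rewrite /u /u' sum_mulss pr_dsum; apply: eq_bigr => r _; apply: eq_bigr => q _.
  by rewrite emul.
by rewrite -uu' -{1}[u]mulr1 -uu' mulrA uu.
Qed.

Lemma v_one : \sum_(r <- R) e r.2 *: r.1 = 1.
Proof.
set v := \sum_(r <- R) _.
have vv : v * v = v.
  apply: eqH => c; have /= := QTb (lin_p c) lin_e lin_e.
  under eq_bigr => p _ do under eq_bigr => q _ do rewrite -mulrA.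
  under eq_bigr => p _ do rewrite -big_distrr /= e_counit.
  move=> E; rewrite /v sum_mulss pr_dsum.
  transitivity (\sum_(r <- R) \sum_(s <- R) pr (r.1 * s.1) c * e s.2 * e r.2).
    by apply: eq_bigr => r _; apply: eq_bigr => s _; ring.
  by rewrite -E pr_suml; apply: eq_bigr => p _; rewrite prZl mulrC.
set v' := \sum_(q <- Ri) e q.2 *: q.1.
have vv' : v * v' = 1.
  apply: eqH => c; have := RRi (lin_p c) lin_e; rewrite e1 mulr1 => <-.
  rewrite /v /v' sum_mulss pr_dsum; apply: eq_bigr => r _; apply: eq_bigr => q _.
  by rewrite emul mulrC.
by rewrite -vv' -{1}[v]mulr1 -vv' mulrA vv.
Qed.

Lemma S0 : S 0 = 0.
Proof. have h := Slin 1 0 0; rewrite scaler0 addr0 scale1r in h. by apply: (@addrI _ (S 0)); rewrite addr0 -h. Qed.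
Lemma SZ c x : S (c *: x) = c *: S x.
Proof. by rewrite -[c *: x]addr0 Slin S0 addr0. Qed.
Lemma SD x y : S (x + y) = S x + S y.
Proof. by rewrite -[x]scale1r Slin !scale1r. Qed.
Lemma S_sum I (L : seq I) (F : I -> H) : S (\sum_(i <- L) F i) = \sum_(i <- L) S (F i).
Proof. elim: L => [|i L IH]; first by rewrite !big_nil S0. by rewrite !big_cons SD IH. Qed.

Lemma tens2_elem t s (L1 L2 : H -> H) : tens2_eq t s -> linmap L1 -> linmap L2 ->
  \sum_(p <- t) L1 p.1 * L2 p.2 = \sum_(p <- s) L1 p.1 * L2 p.2.
Proof.
move=> E h1 h2; apply: eqH => a; rewrite !pr_suml.
under eq_bigr do rewrite prM. under [RHS]eq_bigr do rewrite prM.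
rewrite exchange_big [RHS]exchange_big; apply: eq_bigr => l _.
by apply: (E (fun x => pr (L1 x) l.1) (fun x => pr (L2 x) l.2)); apply: lin_pr.
Qed.

Lemma tens3_elem t s (L1 L2 L3 : H -> H) : tens3_eq t s -> linmap L1 -> linmap L2 -> linmap L3 ->
  \sum_(p <- t) L1 p.1.1 * L2 p.1.2 * L3 p.2 = \sum_(p <- s) L1 p.1.1 * L2 p.1.2 * L3 p.2.
Proof.
move=> E h1 h2 h3; apply: eqH => a; rewrite !pr_suml.
under eq_bigr do rewrite prM. under [RHS]eq_bigr do rewrite prM.
rewrite exchange_big [RHS]exchange_big; apply: eq_bigr => l _.
under eq_bigr do rewrite prM mulr_suml. under [RHS]eq_bigr do rewrite prM mulr_suml.
rewrite exchange_big [RHS]exchange_big; apply: eq_bigr => l' _.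
by apply: (E (fun x => pr (L1 x) l'.1) (fun x => pr (L2 x) l'.2) (fun x => pr (L3 x) l.2)); apply: lin_pr.
Qed.

Lemma coass_elem x (L1 L2 L3 : H -> H) : linmap L1 -> linmap L2 -> linmap L3 ->
  \sum_(p <- d x) \sum_(q <- d p.1) L1 q.1 * L2 q.2 * L3 p.2 =
  \sum_(p <- d x) \sum_(q <- d p.2) L1 p.1 * L2 q.1 * L3 q.2.
Proof.
move=> h1 h2 h3; case: hH => [[_ _ _ h] _ _].
by have := tens3_elem (h x) h1 h2 h3; rewrite !big_allpairs_dep.
Qed.

Lemma dmul_elem x y (L1 L2 : H -> H) : linmap L1 -> linmap L2 ->
  \sum_(p <- d (x * y)) L1 p.1 * L2 p.2 =
  \sum_(p <- d x) \sum_(q <- d y) L1 (p.1 * q.1) * L2 (p.2 * q.2).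
Proof.
move=> h1 h2; case: hH => [[_ h _ _] _ _].
by rewrite (tens2_elem (h x y) h1 h2) big_allpairs_dep.
Qed.

Lemma antR2 z w : \sum_(p <- d z) \sum_(q <- d w) p.1 * q.1 * S q.2 * S p.2 = (e z * e w) *: 1.
Proof.
transitivity (\sum_(p <- d z) e w *: (p.1 * S p.2)).
  apply: eq_bigr => p _; rewrite -big_distrl /=.
  under eq_bigr do rewrite -mulrA. by rewrite -big_distrr /= antR sAr mulr1 sAl.
by rewrite -scaler_sumr antR scalerA mulrC.
Qed.

Lemma S_mul x y : S (x * y) = S y * S x.
Proof.
have Ea : S (x * y) = \sum_(p <- d x) \sum_(q <- d y)
    S (p.1 * q.1) * (\sum_(p' <- d p.2) \sum_(q' <- d q.2) p'.1 * q'.1 * S q'.2 * S p'.2).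
  rewrite -{1}(counitR x) -{1}(counitR y) sum_mulss S_sum; apply: eq_bigr => p _.
  rewrite S_sum; apply: eq_bigr => q _; by rewrite SZ antR2 sAr mulr1.
rewrite Ea; clear Ea.
transitivity (\sum_(q <- d y) \sum_(q' <- d q.2) \sum_(p <- d x) \sum_(p' <- d p.2)
   S (p.1 * q.1) * (p'.1 * q'.1 * S q'.2) * S p'.2).
  rewrite -sum_swap22 -sum_interleave; apply: eq_bigr => p _; apply: eq_bigr => q _.
  rewrite mulr_sumr; apply: eq_bigr => p' _; rewrite mulr_sumr; apply: eq_bigr => q' _.
  by rewrite !mulrA.
transitivity (\sum_(q <- d y) \sum_(q' <- d q.2) \sum_(p <- d x) \sum_(p' <- d p.1)
   S (p'.1 * q.1) * (p'.2 * q'.1 * S q'.2) * S p.2).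
  apply: eq_bigr => q _; apply: eq_bigr => q' _.
  rewrite -(coass_elem x (L1 := fun a => S (a * q.1)) (L2 := fun b => b * q'.1 * S q'.2) (L3 := S)) //;
  linmap_tac.
rewrite sum_swap22.
transitivity (\sum_(p <- d x) \sum_(p' <- d p.1) \sum_(q <- d y) \sum_(q' <- d q.1)
   S (p'.1 * q'.1) * p'.2 * q'.2 * (S q.2 * S p.2)).
  apply: eq_bigr => p _; apply: eq_bigr => p' _.
  transitivity (\sum_(q <- d y) \sum_(q' <- d q.2)
     S (p'.1 * q.1) * p'.2 * q'.1 * (S q'.2 * S p.2)).
    by apply: eq_bigr => q _; apply: eq_bigr => q' _; rewrite !mulrA.
  rewrite -(coass_elem y (L1 := fun a => S (p'.1 * a) * p'.2) (L2 := id) (L3 := fun c => S c * S p.2)) //;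
  linmap_tac.
transitivity (\sum_(p <- d x) \sum_(q <- d y) (e p.1 * e q.1) *: (S q.2 * S p.2)).
  rewrite -sum_interleave. apply: eq_bigr => p _; apply: eq_bigr => q _.
  transitivity (\sum_(p' <- d p.1) \sum_(q' <- d q.1) S (p'.1 * q'.1) * (p'.2 * q'.2 * (S q.2 * S p.2))).
    by apply: eq_bigr => p' _; apply: eq_bigr => q' _; rewrite !mulrA.
  rewrite -(@dmul_elem _ _ S (fun b => b * (S q.2 * S p.2))); last 2 first.
  - exact: Slin.
  - by linmap_tac.
  under eq_bigr do rewrite mulrA.
  by rewrite -mulr_suml antL sAl mul1r emul.
rewrite -[in RHS](counitL y) -[in RHS](counitL x) !S_sum.
under [in RHS]eq_bigr do rewrite SZ. under [in X in _ = _ * X]eq_bigr do rewrite SZ.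
rewrite sum_mulss exchange_big; apply: eq_bigr => q _; apply: eq_bigr => p _.
by rewrite mulrC.
Qed.

Lemma S1 : S 1 = 1.
Proof.
case: hH => [[_ _ h _] _ _]; have := tens2_elem h Slin (L2 := id) (fun c x y => erefl).
by rewrite big_seq1 /= antL e1 scale1r mulr1.
Qed.

Definition wmap (L : H -> H) := exists phi : Hs -> Hs, forall a x, pr (L x) a = pr x (phi a).
Definition pf (f : H -> K) := exists a, forall x, f x = pr x a.

Lemma wmap_id : wmap (fun x => x). Proof. by exists id. Qed.
Lemma wmap_l A L : wmap L -> wmap (fun x => A * L x).
Proof.
case=> phi hphi; exists (fun a => \sum_(p <- ds a) pr A p.1 *: phi p.2) => a x.
rewrite prM pr_sumr; apply: eq_bigr => p _; by rewrite prZr hphi.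
Qed.
Lemma wmap_r B L : wmap L -> wmap (fun x => L x * B).
Proof.
case=> phi hphi; exists (fun a => \sum_(p <- ds a) pr B p.2 *: phi p.1) => a x.
rewrite prM pr_sumr; apply: eq_bigr => p _; by rewrite prZr hphi mulrC.
Qed.
Lemma wmap_S L : wmap L -> wmap (fun x => S (L x)).
Proof. by case=> phi hphi; exists (fun a => phi (Ss a)) => a x; rewrite prS hphi. Qed.

Lemma pf_pr L a : wmap L -> pf (fun x => pr (L x) a).
Proof. by case=> phi hphi; exists (phi a). Qed.
Lemma pf_scal c f : pf f -> pf (fun x => c * f x).
Proof. by case=> a ha; exists (c *: a) => x; rewrite prZr ha. Qed.
Lemma pf_scar c f : pf f -> pf (fun x => f x * c).
Proof. by case=> a ha; exists (c *: a) => x; rewrite prZr ha mulrC. Qed.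
Lemma pf_e : pf e.
Proof. by exists 1 => x; rewrite pr1r. Qed.

Inductive dp2 : (H -> H -> K) -> Prop :=
  | Dp2 a b : dp2 (fun x y => pr x a * pr y b)
  | Dp2add F G : dp2 F -> dp2 G -> dp2 (fun x y => F x y + G x y)
  | Dp2zero : dp2 (fun _ _ => 0)
  | Dp2ext F G : (forall x y, F x y = G x y) -> dp2 G -> dp2 F.

Inductive dp3 : (H -> H -> H -> K) -> Prop :=
  | Dp3 a b c : dp3 (fun x y z => pr x a * pr y b * pr z c)
  | Dp3add F G : dp3 F -> dp3 G -> dp3 (fun x y z => F x y z + G x y z)
  | Dp3zero : dp3 (fun _ _ _ => 0)
  | Dp3ext F G : (forall x y z, F x y z = G x y z) -> dp3 G -> dp3 F.

Lemma dp2_dec F : dp2 F -> dec2 F.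
Proof.
elim=> {F} [a b|F G _ IF _ IG||F G FG _ IG].
- by apply: Dec2; apply: lin_p.
- exact: Dec2add.
- exact: Dec2zero.
- exact: Dec2ext FG IG.
Qed.
Lemma dp3_dec F : dp3 F -> dec3 F.
Proof.
elim=> {F} [a b c|F G _ IF _ IG||F G FG _ IG].
- by apply: Dec3; apply: lin_p.
- exact: Dec3add.
- exact: Dec3zero.
- exact: Dec3ext FG IG.
Qed.

Lemma dp2_sum I (L : seq I) (F : I -> H -> H -> K) :
  (forall i, dp2 (F i)) -> dp2 (fun x y => \sum_(i <- L) F i x y).
Proof.
move=> hF; elim: L => [|i L IH].
  by apply: (Dp2ext _ Dp2zero) => x y; rewrite big_nil.
by apply: (Dp2ext _ (Dp2add (hF i) IH)) => x y; rewrite big_cons.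
Qed.
Lemma dp3_sum I (L : seq I) (F : I -> H -> H -> H -> K) :
  (forall i, dp3 (F i)) -> dp3 (fun x y z => \sum_(i <- L) F i x y z).
Proof.
move=> hF; elim: L => [|i L IH].
  by apply: (Dp3ext _ Dp3zero) => x y z; rewrite big_nil.
by apply: (Dp3ext _ (Dp3add (hF i) IH)) => x y z; rewrite big_cons.
Qed.

Lemma dp2_scal c F : dp2 F -> dp2 (fun x y => c * F x y).
Proof.
elim=> {F} [a b|F G _ IF _ IG||F G FG _ IG].
- by apply: (Dp2ext _ (Dp2 (c *: a) b)) => x y; rewrite prZr mulrA.
- by apply: (Dp2ext _ (Dp2add IF IG)) => x y; rewrite mulrDr.
- by apply: (Dp2ext _ Dp2zero) => x y; rewrite mulr0.
- by apply: (Dp2ext _ IG) => x y; rewrite FG.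
Qed.
Lemma dp3_scal c F : dp3 F -> dp3 (fun x y z => c * F x y z).
Proof.
elim=> {F} [a b c'|F G _ IF _ IG||F G FG _ IG].
- by apply: (Dp3ext _ (Dp3 (c *: a) b c')) => x y z; rewrite prZr !mulrA.
- by apply: (Dp3ext _ (Dp3add IF IG)) => x y z; rewrite mulrDr.
- by apply: (Dp3ext _ Dp3zero) => x y z; rewrite mulr0.
- by apply: (Dp3ext _ IG) => x y z; rewrite FG.
Qed.

Lemma dp2_scar c F : dp2 F -> dp2 (fun x y => F x y * c).
Proof. by move=> hF; apply: (Dp2ext (fun x y => mulrC _ _)); apply: dp2_scal. Qed.
Lemma dp3_scar c F : dp3 F -> dp3 (fun x y z => F x y z * c).
Proof. by move=> hF; apply: (Dp3ext (fun x y z => mulrC _ _)); apply: dp3_scal. Qed.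
Lemma dp2_prod f g : pf f -> pf g -> dp2 (fun x y => f x * g y).
Proof. by case=> a ha [b hb]; apply: (Dp2ext _ (Dp2 a b)) => x y; rewrite ha hb. Qed.
Lemma dp2_prodC f g : pf f -> pf g -> dp2 (fun x y => f y * g x).
Proof. by case=> a ha [b hb]; apply: (Dp2ext _ (Dp2 b a)) => x y; rewrite ha hb mulrC. Qed.
Lemma dp3_prod f g k : pf f -> pf g -> pf k -> dp3 (fun x y z => f x * g y * k z).
Proof. by case=> a ha [b hb] [c hc]; apply: (Dp3ext _ (Dp3 a b c)) => x y z; rewrite ha hb hc. Qed.

Lemma dp3_prod0 f g k : pf f -> pf g -> pf k -> dp3 (fun x y z => f x * g z * k y).
Proof.
case=> a ha [b hb] [c hc]; apply: (Dp3ext _ (dp3_prod (pf_pr (L := id) _ wmap_id) (pf_pr (L := id) _ wmap_id) (pf_pr (L := id) _ wmap_id))) => x y z.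
rewrite ha hb hc /=; ring.
Qed.
Lemma dp3_prod1 f g k : pf f -> pf g -> pf k -> dp3 (fun x y z => f y * g x * k z).
Proof.
case=> a ha [b hb] [c hc]; apply: (Dp3ext _ (dp3_prod (pf_pr (L := id) _ wmap_id) (pf_pr (L := id) _ wmap_id) (pf_pr (L := id) _ wmap_id))) => x y z.
rewrite ha hb hc /=; ring.
Qed.
Lemma dp3_prod2 f g k : pf f -> pf g -> pf k -> dp3 (fun x y z => f y * g z * k x).
Proof.
case=> a ha [b hb] [c hc]; apply: (Dp3ext _ (dp3_prod (pf_pr (L := id) _ wmap_id) (pf_pr (L := id) _ wmap_id) (pf_pr (L := id) _ wmap_id))) => x y z.
rewrite ha hb hc /=; ring.
Qed.
Lemma dp3_prod3 f g k : pf f -> pf g -> pf k -> dp3 (fun x y z => f z * g x * k y).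
Proof.
case=> a ha [b hb] [c hc]; apply: (Dp3ext _ (dp3_prod (pf_pr (L := id) _ wmap_id) (pf_pr (L := id) _ wmap_id) (pf_pr (L := id) _ wmap_id))) => x y z.
rewrite ha hb hc /=; ring.
Qed.
Lemma dp3_prod4 f g k : pf f -> pf g -> pf k -> dp3 (fun x y z => f z * g y * k x).
Proof.
case=> a ha [b hb] [c hc]; apply: (Dp3ext _ (dp3_prod (pf_pr (L := id) _ wmap_id) (pf_pr (L := id) _ wmap_id) (pf_pr (L := id) _ wmap_id))) => x y z.
rewrite ha hb hc /=; ring.
Qed.
Lemma dp3_21 F k : dp2 F -> pf k -> dp3 (fun x y z => F x y * k z).
Proof.
move=> hF [c hc]; elim: hF => {F} [a b|F G _ IF _ IG||F G FG _ IG].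
- by apply: (Dp3ext _ (Dp3 a b c)) => x y z; rewrite hc.
- by apply: (Dp3ext _ (Dp3add IF IG)) => x y z; rewrite mulrDl.
- by apply: (Dp3ext _ Dp3zero) => x y z; rewrite mul0r.
- by apply: (Dp3ext _ IG) => x y z; rewrite FG.
Qed.
Lemma dp3_12 f G : pf f -> dp2 G -> dp3 (fun x y z => f x * G y z).
Proof.
move=> [a ha] hG; elim: hG => {G} [b c|F G _ IF _ IG||F G FG _ IG].
- by apply: (Dp3ext _ (Dp3 a b c)) => x y z; rewrite ha mulrA.
- by apply: (Dp3ext _ (Dp3add IF IG)) => x y z; rewrite mulrDr.
- by apply: (Dp3ext _ Dp3zero) => x y z; rewrite mulr0.
- by apply: (Dp3ext _ IG) => x y z; rewrite FG.
Qed.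
Lemma dp3_13 F g : dp2 F -> pf g -> dp3 (fun x y z => F x z * g y).
Proof.
move=> hF [b hb]; elim: hF => {F} [a c|F G _ IF _ IG||F G FG _ IG].
- by apply: (Dp3ext _ (Dp3 a b c)) => x y z; rewrite hb mulrAC.
- by apply: (Dp3ext _ (Dp3add IF IG)) => x y z; rewrite mulrDl.
- by apply: (Dp3ext _ Dp3zero) => x y z; rewrite mul0r.
- by apply: (Dp3ext _ IG) => x y z; rewrite FG.
Qed.
Lemma dp3_31 F k : dp2 F -> pf k -> dp3 (fun x y z => k z * F x y).
Proof. by move=> hF hk; apply: (Dp3ext (fun x y z => mulrC _ _)); apply: dp3_21. Qed.
Lemma dp3_23 F g : dp2 F -> pf g -> dp3 (fun x y z => g x * F y z).
Proof. move=> hF hg; exact: dp3_12. Qed.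

Definition bw (L : H -> H -> H) := forall a, dp2 (fun x y => pr (L x y) a).
Lemma bw_split L1 L2 : wmap L1 -> wmap L2 -> bw (fun x y => L1 x * L2 y).
Proof.
case=> p1 h1 [p2 h2] a; apply: (Dp2ext (fun x y => prM _ _ _)).
by apply: dp2_sum => p; apply: (Dp2ext _ (Dp2 (p1 p.1) (p2 p.2))) => x y; rewrite h1 h2.
Qed.
Lemma bw_swap L1 L2 : wmap L1 -> wmap L2 -> bw (fun x y => L1 y * L2 x).
Proof.
case=> p1 h1 [p2 h2] a; apply: (Dp2ext (fun x y => prM _ _ _)).
by apply: dp2_sum => p; apply: (Dp2ext _ (Dp2 (p2 p.2) (p1 p.1))) => x y; rewrite h1 h2 mulrC.
Qed.
Lemma bw_l A L : bw L -> bw (fun x y => A * L x y).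
Proof.
move=> hL a; apply: (Dp2ext (fun x y => prM _ _ _)).
by apply: dp2_sum => p; apply: dp2_scal.
Qed.
Lemma bw_r B L : bw L -> bw (fun x y => L x y * B).
Proof.
move=> hL a; apply: (Dp2ext (fun x y => prM _ _ _)).
apply: dp2_sum => p; apply: (Dp2ext (fun x y => mulrC _ _)); exact: dp2_scal.
Qed.
Lemma dp2_bw L a : bw L -> dp2 (fun x y => pr (L x y) a).
Proof. by apply. Qed.

Ltac wmap_tac := repeat first [ apply: wmap_id | apply: wmap_S | apply: wmap_r | apply: wmap_l ].
Ltac pf_tac := repeat first [ apply: pf_e | apply: pf_pr; wmap_tac | apply: pf_scal | apply: pf_scar ].
Ltac bw_tac := repeat first [ apply: bw_split; wmap_tac | apply: bw_swap; wmap_tac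
                            | apply: bw_r | apply: bw_l ].
Ltac dp_tac := repeat first [ apply: dp3_prod; pf_tac | apply: dp3_prod0; pf_tac | apply: dp3_prod1; pf_tac | apply: dp3_prod2; pf_tac | apply: dp3_prod3; pf_tac | apply: dp3_prod4; pf_tac | apply: dp3_21 | apply: dp3_12 | apply: dp3_13
   | apply: dp3_31
   | apply: dp2_prod; pf_tac | apply: dp2_prodC; pf_tac | apply: dp2_scal | apply: dp2_scar
   | apply: dp3_scal | apply: dp3_scar | apply: dp2_bw; bw_tac | pf_tac ].

Lemma dp_test1 A B C a b c : dp3 (fun x y z => pr (A * x * B) a * pr (S y * C) b * pr z c).
Proof. dp_tac. Qed.
Lemma dp_test2 A B C a b : dp3 (fun x y z => pr (A * S x * B * y * C) a * pr (z * C) b).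
Proof. dp_tac. Qed.
Lemma dp_test3 A B C a b : dp3 (fun x y z => pr (A * S x * B * z * C) a * pr (y * C) b).
Proof. dp_tac. Qed.

Lemma QTa_d G : dec3 G ->
  \sum_(p <- R) \sum_(q <- d p.1) G q.1 q.2 p.2 = \sum_(r <- R) \sum_(s <- R) G r.1 s.1 (r.2 * s.2).
Proof. by move=> hG; case: hQ => _ h _; have := dec3_use hG h; rewrite !big_allpairs_dep. Qed.
Lemma QTb_d G : dec3 G ->
  \sum_(p <- R) \sum_(q <- d p.2) G p.1 q.1 q.2 = \sum_(r <- R) \sum_(s <- R) G (r.1 * s.1) s.2 r.2.
Proof. by move=> hG; case: hQ => _ _ h; have := dec3_use hG h; rewrite !big_allpairs_dep. Qed.
Lemma RRi_d F : dec2 F -> \sum_(r <- R) \sum_(q <- Ri) F (r.1 * q.1) (r.2 * q.2) = F 1 1.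
Proof. by move=> hF; case: hRi => h _ _; have := dec2_use hF h; rewrite big_allpairs_dep big_seq1. Qed.
Lemma RiR_d F : dec2 F -> \sum_(r <- R) \sum_(q <- Ri) F (q.1 * r.1) (q.2 * r.2) = F 1 1.
Proof. by move=> hF; case: hRi => _ h _; have := dec2_use hF h; rewrite big_allpairs_dep big_seq1. Qed.
Lemma QTc_d x F : dec2 F -> \sum_(p <- d x) F p.2 p.1 =
  \sum_(r <- R) \sum_(p <- d x) \sum_(q <- Ri) F (r.1 * p.1 * q.1) (r.2 * p.2 * q.2).
Proof.
move=> hF; case: hRi => _ _ h; have := dec2_use hF (h x); rewrite big_map big_allpairs_dep => ->.
by apply: eq_bigr => r _; rewrite big_allpairs_dep.
Qed.
Lemma dmul_d x y F : dec2 F -> \sum_(u <- d (x * y)) F u.1 u.2 =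
  \sum_(p <- d x) \sum_(q <- d y) F (p.1 * q.1) (p.2 * q.2).
Proof. by move=> hF; case: hH => [[_ h _ _] _ _]; rewrite (dec2_use hF (h x y)) big_allpairs_dep. Qed.
Lemma coass_d x G : dec3 G ->
  \sum_(p <- d x) \sum_(q <- d p.1) G q.1 q.2 p.2 = \sum_(p <- d x) \sum_(q <- d p.2) G p.1 q.1 q.2.
Proof. by move=> hG; case: hH => [[_ _ _ h] _ _]; have := dec3_use hG (h x); rewrite !big_allpairs_dep. Qed.
Lemma d1_d F : dec2 F -> \sum_(u <- d 1) F u.1 u.2 = F 1 1.
Proof. by move=> hF; case: hH => [[_ _ h _] _ _]; rewrite (dec2_use hF h) big_seq1. Qed.
Lemma dlin_d c x y F : dec2 F -> \sum_(u <- d (c *: x + y)) F u.1 u.2 =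
  c * \sum_(u <- d x) F u.1 u.2 + \sum_(u <- d y) F u.1 u.2.
Proof.
move=> hF; case: hH => [[h _ _ _] _ _]; rewrite (dec2_use hF (h c x y)) big_cat big_map /=.
congr (_ + _); rewrite mulr_sumr; apply: eq_bigr => p _.
elim: hF => {F} [f g hf hg|F G _ IF _ IG| |F G FG _ IG].
- by case/linP: hf => _ hZ _; rewrite hZ mulrA.
- by rewrite IF IG mulrDr.
- by rewrite mulr0.
- by rewrite !FG IG.
Qed.
Lemma d0_d F : dec2 F -> \sum_(u <- d 0) F u.1 u.2 = 0.
Proof.
move=> hF; have := dlin_d 1 0 0 hF; rewrite scaler0 addr0 mul1r => h.
by apply: (@addrI _ (\sum_(u <- d 0) F u.1 u.2)); rewrite addr0 -h.
Qed.
Lemma dsum_d I (L : seq I) (c : I -> K) (X : I -> H) F : dec2 F ->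
  \sum_(u <- d (\sum_(i <- L) c i *: X i)) F u.1 u.2 = \sum_(i <- L) c i * \sum_(u <- d (X i)) F u.1 u.2.
Proof.
move=> hF; elim: L => [|i L IH]; first by rewrite !big_nil d0_d.
by rewrite !big_cons dlin_d // IH.
Qed.

Lemma lift2 (T1 T2 : seq (H * H)) :
  (forall a b, \sum_(p <- T1) pr p.1 a * pr p.2 b = \sum_(p <- T2) pr p.1 a * pr p.2 b) ->
  forall F, dp2 F -> \sum_(p <- T1) F p.1 p.2 = \sum_(p <- T2) F p.1 p.2.
Proof.
move=> E F; elim=> {F} [a b|F G _ IF _ IG| |F G FG _ IG].
- exact: E.
- by rewrite !big_split /= IF IG.
- by rewrite !big1.
- by rewrite (eq_bigr _ (fun p _ => FG p.1 p.2)) IG; apply: eq_bigr => p _; rewrite FG.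
Qed.
Lemma lift3 (T1 T2 : seq (H * H * H)) :
  (forall a b c, \sum_(p <- T1) pr p.1.1 a * pr p.1.2 b * pr p.2 c =
                 \sum_(p <- T2) pr p.1.1 a * pr p.1.2 b * pr p.2 c) ->
  forall F, dp3 F -> \sum_(p <- T1) F p.1.1 p.1.2 p.2 = \sum_(p <- T2) F p.1.1 p.1.2 p.2.
Proof.
move=> E F; elim=> {F} [a b c|F G _ IF _ IG| |F G FG _ IG].
- exact: E.
- by rewrite !big_split /= IF IG.
- by rewrite !big1.
- by rewrite (eq_bigr _ (fun p _ => FG p.1.1 p.1.2 p.2)) IG; apply: eq_bigr => p _; rewrite FG.
Qed.

Ltac d2 := apply: dp2_dec; dp_tac.
Ltac d3 := apply: dp3_dec; dp_tac.

Lemma Linv_at a b :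
  \sum_(r <- R) \sum_(s <- R) pr (S r.1 * s.1) a * pr (r.2 * s.2) b = pr 1 a * pr 1 b.
Proof.
rewrite -(QTa_d (G := fun x y z => pr (S x * y) a * pr z b)); last by d3.
transitivity (\sum_(p <- R) pr (e p.1 *: 1) a * pr p.2 b).
  by apply: eq_bigr => p _; rewrite -mulr_suml -pr_suml antL.
rewrite -[in pr 1 b]u_one pr_suml mulr_sumr; apply: eq_bigr => p _; rewrite !prZl; ring.
Qed.

Lemma Linv F : dp2 F -> \sum_(r <- R) \sum_(s <- R) F (S r.1 * s.1) (r.2 * s.2) = F 1 1.
Proof.
move=> hF; have := lift2 (T1 := [seq (S r.1 * s.1, r.2 * s.2) | r <- R, s <- R]) (T2 := [:: (1, 1)]) _ hF.
rewrite big_allpairs_dep big_seq1; apply=> a b; rewrite big_allpairs_dep big_seq1; exact: Linv_at.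
Qed.

Lemma Ri_eq_at a b : \sum_(r <- R) pr (S r.1) a * pr r.2 b = \sum_(q <- Ri) pr q.1 a * pr q.2 b.
Proof.
transitivity (\sum_(r <- R) \sum_(s <- R) \sum_(q <- Ri) pr (S r.1 * s.1 * q.1) a * pr (r.2 * s.2 * q.2) b).
  apply: eq_bigr => r _.
  transitivity (\sum_(s <- R) \sum_(q <- Ri) pr (S r.1 * (s.1 * q.1)) a * pr (r.2 * (s.2 * q.2)) b).
    by rewrite (RRi_d (F := fun x y => pr (S r.1 * x) a * pr (r.2 * y) b)) /= ?mulr1 //; d2.
  by apply: eq_bigr => s _; apply: eq_bigr => q _; rewrite !mulrA.
rewrite sum_rot3; apply: eq_bigr => q _.
by rewrite (Linv (F := fun x y => pr (x * q.1) a * pr (y * q.2) b)) ?mul1r //; dp_tac.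
Qed.

Lemma Ri_eq F : dp2 F -> \sum_(r <- R) F (S r.1) r.2 = \sum_(q <- Ri) F q.1 q.2.
Proof.
move=> hF; have := lift2 (T1 := [seq (S r.1, r.2) | r <- R]) (T2 := Ri) _ hF.
rewrite big_map; apply=> a b; rewrite big_map; exact: Ri_eq_at.
Qed.

Lemma M1_at a b :
  \sum_(r <- R) \sum_(q <- Ri) pr (S r.1 * q.1) a * pr (S r.2 * q.2) b = pr 1 a * pr 1 b.
Proof.
transitivity (\sum_(r <- R) \sum_(s <- R) pr (S (s.1 * r.1)) a * pr (S r.2 * s.2) b).
  apply: eq_bigr => r _.
  rewrite -(Ri_eq (F := fun x y => pr (S r.1 * x) a * pr (S r.2 * y) b)); last by dp_tac.
  by apply: eq_bigr => s _; rewrite S_mul.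
rewrite sum_exch -(QTb_d (G := fun x y z => pr (S x) a * pr (S y * z) b)); last by d3.
transitivity (\sum_(p <- R) pr (S p.1) a * pr (e p.2 *: 1) b).
  by apply: eq_bigr => p _; rewrite -mulr_sumr -pr_suml antL.
rewrite -S1 -[in pr (S 1) a]v_one S_sum pr_suml mulr_suml; apply: eq_bigr => p _.
by rewrite SZ !prZl S1; ring.
Qed.

Lemma M1 F : dp2 F -> \sum_(r <- R) \sum_(q <- Ri) F (S r.1 * q.1) (S r.2 * q.2) = F 1 1.
Proof.
move=> hF; have := lift2 (T1 := [seq (S r.1 * q.1, S r.2 * q.2) | r <- R, q <- Ri]) (T2 := [:: (1, 1)]) _ hF.
rewrite big_allpairs_dep big_seq1; apply=> a b; rewrite big_allpairs_dep big_seq1; exact: M1_at.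
Qed.

Lemma SSR_at a b : \sum_(r <- R) pr (S r.1) a * pr (S r.2) b = \sum_(r <- R) pr r.1 a * pr r.2 b.
Proof.
transitivity (\sum_(r <- R) \sum_(t <- R) \sum_(q <- Ri) pr (S r.1 * q.1 * t.1) a * pr (S r.2 * q.2 * t.2) b).
  apply: eq_bigr => r _.
  transitivity (\sum_(t <- R) \sum_(q <- Ri) pr (S r.1 * (q.1 * t.1)) a * pr (S r.2 * (q.2 * t.2)) b).
    by rewrite (RiR_d (F := fun x y => pr (S r.1 * x) a * pr (S r.2 * y) b)) /= ?mulr1 //; d2.
  by apply: eq_bigr => t _; apply: eq_bigr => q _; rewrite !mulrA.
rewrite sum_exch; apply: eq_bigr => t _.
by rewrite (M1 (F := fun x y => pr (x * t.1) a * pr (y * t.2) b)) ?mul1r //; dp_tac.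
Qed.

Lemma SSR F : dp2 F -> \sum_(r <- R) F (S r.1) (S r.2) = \sum_(r <- R) F r.1 r.2.
Proof.
move=> hF; have := lift2 (T1 := [seq (S r.1, S r.2) | r <- R]) (T2 := R) _ hF.
rewrite big_map; apply=> a b; rewrite big_map; exact: SSR_at.
Qed.

Lemma RD_at x a b : \sum_(r <- R) \sum_(p <- d x) pr (r.1 * p.1) a * pr (r.2 * p.2) b =
  \sum_(r <- R) \sum_(p <- d x) pr (p.2 * r.1) a * pr (p.1 * r.2) b.
Proof.
symmetry.
transitivity (\sum_(r <- R) \sum_(r' <- R) \sum_(p <- d x) \sum_(q <- Ri)
    pr (r'.1 * p.1 * (q.1 * r.1)) a * pr (r'.2 * p.2 * (q.2 * r.2)) b).
  apply: eq_bigr => r _.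
  rewrite (QTc_d x (F := fun u v => pr (u * r.1) a * pr (v * r.2) b)); last by d2.
  apply: eq_bigr => r' _; apply: eq_bigr => p _; apply: eq_bigr => q _; by rewrite !mulrA.
rewrite sum_exch; under eq_bigr do rewrite sum_exch.
apply: eq_bigr => r' _; apply: eq_bigr => p _.
by rewrite (RiR_d (F := fun u v => pr (r'.1 * p.1 * u) a * pr (r'.2 * p.2 * v) b)) ?mulr1 //; d2.
Qed.

Lemma liftF2 (P1 P2 : (H -> H -> K) -> K) :
  (forall F G, P1 (fun x y => F x y + G x y) = P1 F + P1 G) ->
  (forall F G, P2 (fun x y => F x y + G x y) = P2 F + P2 G) ->
  P1 (fun _ _ => 0) = 0 -> P2 (fun _ _ => 0) = 0 ->
  (forall F G, (forall x y, F x y = G x y) -> P1 F = P1 G) ->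
  (forall F G, (forall x y, F x y = G x y) -> P2 F = P2 G) ->
  (forall a b, P1 (fun x y => pr x a * pr y b) = P2 (fun x y => pr x a * pr y b)) ->
  forall F, dp2 F -> P1 F = P2 F.
Proof.
move=> A1 A2 Z1 Z2 E1 E2 hat F; elim=> {F} [a b|F G _ IF _ IG| |F G FG _ IG].
- exact: hat.
- by rewrite A1 A2 IF IG.
- by rewrite Z1 Z2.
- by rewrite (E1 _ _ FG) (E2 _ _ FG).
Qed.

Lemma liftF3 (P1 P2 : (H -> H -> H -> K) -> K) :
  (forall F G, P1 (fun x y z => F x y z + G x y z) = P1 F + P1 G) ->
  (forall F G, P2 (fun x y z => F x y z + G x y z) = P2 F + P2 G) ->
  P1 (fun _ _ _ => 0) = 0 -> P2 (fun _ _ _ => 0) = 0 ->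
  (forall F G, (forall x y z, F x y z = G x y z) -> P1 F = P1 G) ->
  (forall F G, (forall x y z, F x y z = G x y z) -> P2 F = P2 G) ->
  (forall a b c, P1 (fun x y z => pr x a * pr y b * pr z c) = P2 (fun x y z => pr x a * pr y b * pr z c)) ->
  forall F, dp3 F -> P1 F = P2 F.
Proof.
move=> A1 A2 Z1 Z2 E1 E2 hat F; elim=> {F} [a b c|F G _ IF _ IG| |F G FG _ IG].
- exact: hat.
- by rewrite A1 A2 IF IG.
- by rewrite Z1 Z2.
- by rewrite (E1 _ _ FG) (E2 _ _ FG).
Qed.

Ltac side_add := let F := fresh "F" in let G := fresh "G" in move=> F G /=;
  repeat (rewrite -big_split /=; apply: eq_bigr => ? _); try done.
Ltac side_zero := rewrite /=; repeat (apply: big1 => ? _); try done.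
Ltac side_ext := let F := fresh "F" in let G := fresh "G" in let E := fresh "E" in
  move=> F G E /=; repeat (apply: eq_bigr => ? _); try apply: E.
Ltac lift2_tac := apply: liftF2; [side_add|side_add|side_zero|side_zero|side_ext|side_ext|].
Ltac lift3_tac := apply: liftF3; [side_add|side_add|side_zero|side_zero|side_ext|side_ext|].

Lemma RD x : forall F, dp2 F ->
  \sum_(r <- R) \sum_(p <- d x) F (r.1 * p.1) (r.2 * p.2) =
  \sum_(r <- R) \sum_(p <- d x) F (p.2 * r.1) (p.1 * r.2).
Proof. lift2_tac => a b; exact: RD_at. Qed.

Lemma adQ_at x a b :
  \sum_(p <- d x) \sum_(r <- R) \sum_(s <- R) pr (r.2 * s.1 * p.1) a * pr (r.1 * s.2 * p.2) b =
  \sum_(p <- d x) \sum_(r <- R) \sum_(s <- R) pr (p.1 * (r.2 * s.1)) a * pr (p.2 * (r.1 * s.2)) b.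
Proof.
transitivity (\sum_(r <- R) \sum_(s <- R) \sum_(p <- d x) pr (r.2 * (s.1 * p.1)) a * pr (r.1 * (s.2 * p.2)) b).
  rewrite [RHS]sum_rot3; apply: eq_bigr => p _; apply: eq_bigr => r _; apply: eq_bigr => s _.
  by rewrite !mulrA.
transitivity (\sum_(r <- R) \sum_(s <- R) \sum_(p <- d x) pr (r.2 * (p.2 * s.1)) a * pr (r.1 * (p.1 * s.2)) b).
  apply: eq_bigr => r _.
  by rewrite (RD x (F := fun u v => pr (r.2 * u) a * pr (r.1 * v) b)) //; dp_tac.
rewrite sum_exch.
transitivity (\sum_(s <- R) \sum_(r <- R) \sum_(p <- d x) pr (p.1 * r.2 * s.1) a * pr (p.2 * r.1 * s.2) b).
  apply: eq_bigr => s _.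
  transitivity (\sum_(r <- R) \sum_(p <- d x) (fun u v => pr (v * s.1) a * pr (u * s.2) b) (r.1 * p.1) (r.2 * p.2)).
    by apply: eq_bigr => r _; apply: eq_bigr => p _; rewrite /= !mulrA.
  by rewrite (RD x (F := fun u v => pr (v * s.1) a * pr (u * s.2) b)) //; dp_tac.
rewrite sum_rot3; apply: eq_bigr => p _; rewrite sum_exch; apply: eq_bigr => r _; apply: eq_bigr => s _.
by rewrite !mulrA.
Qed.

Lemma adQ x : forall F, dp2 F ->
  \sum_(p <- d x) \sum_(r <- R) \sum_(s <- R) F (r.2 * s.1 * p.1) (r.1 * s.2 * p.2) =
  \sum_(p <- d x) \sum_(r <- R) \sum_(s <- R) F (p.1 * (r.2 * s.1)) (p.2 * (r.1 * s.2)).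
Proof. lift2_tac => a b; exact: adQ_at. Qed.

Lemma Xinv_at a b :
  \sum_(r <- R) \sum_(t <- R) pr (r.1 * t.1) a * pr (S t.2 * r.2) b = pr 1 a * pr 1 b.
Proof.
rewrite -(QTb_d (G := fun x y z => pr x a * pr (S y * z) b)); last by d3.
transitivity (\sum_(p <- R) pr p.1 a * pr (e p.2 *: 1) b).
  by apply: eq_bigr => p _; rewrite -mulr_sumr -pr_suml antL.
rewrite -[in pr 1 a]v_one pr_suml mulr_suml; apply: eq_bigr => p _; rewrite !prZl; ring.
Qed.

Lemma Xinv : forall F, dp2 F -> \sum_(r <- R) \sum_(t <- R) F (r.1 * t.1) (S t.2 * r.2) = F 1 1.
Proof. lift2_tac => a b; exact: Xinv_at. Qed.

Lemma D2_at a b c :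
  \sum_(r <- R) \sum_(s <- R) \sum_(t <- R) \sum_(t' <- R)
     pr (t.2 * r.2 * s.1 * t'.1) b * pr (t.1 * t'.2) a * pr (r.1 * s.2) c =
  \sum_(r <- R) \sum_(s <- R) \sum_(f <- d r.1) \sum_(g <- d s.2)
     pr (r.2 * s.1) b * pr (f.1 * g.1) a * pr (f.2 * g.2) c.
Proof.
symmetry.
transitivity (\sum_(s <- R) \sum_(g <- d s.2) \sum_(t <- R) \sum_(r <- R)
     pr (t.2 * r.2 * s.1) b * pr (t.1 * g.1) a * pr (r.1 * g.2) c).
  rewrite sum_interleave sum_swap22; apply: eq_bigr => s _; apply: eq_bigr => g _.
  by rewrite (QTa_d (G := fun x y z => pr (z * s.1) b * pr (x * g.1) a * pr (y * g.2) c)) //; d3.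
transitivity (\sum_(t <- R) \sum_(r <- R) \sum_(s <- R) \sum_(g <- d s.2)
     pr (t.2 * r.2 * s.1) b * pr (t.1 * g.1) a * pr (r.1 * g.2) c).
  by rewrite sum_swap22.
transitivity (\sum_(t <- R) \sum_(r <- R) \sum_(s <- R) \sum_(t' <- R)
     pr (t.2 * r.2 * (s.1 * t'.1)) b * pr (t.1 * t'.2) a * pr (r.1 * s.2) c).
  apply: eq_bigr => t _; apply: eq_bigr => r _.
  by rewrite (QTb_d (G := fun x y z => pr (t.2 * r.2 * x) b * pr (t.1 * y) a * pr (r.1 * z) c)) //; d3.
rewrite sum_exch; apply: eq_bigr => r _; rewrite sum_exch; apply: eq_bigr => s _.
apply: eq_bigr => t _; apply: eq_bigr => t' _; by rewrite !mulrA.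
Qed.

Lemma D2 : forall F, dp3 F ->
  \sum_(r <- R) \sum_(s <- R) \sum_(t <- R) \sum_(t' <- R)
     F (t.2 * r.2 * s.1 * t'.1) (t.1 * t'.2) (r.1 * s.2) =
  \sum_(r <- R) \sum_(s <- R) \sum_(f <- d r.1) \sum_(g <- d s.2)
     F (r.2 * s.1) (f.1 * g.1) (f.2 * g.2).
Proof. lift3_tac => a b c; exact: (D2_at b a c). Qed.

Lemma D1_E01 h a b :
  \sum_(t <- d h) \sum_(r <- R) \sum_(s <- R) pr (r.2 * s.1) a * pr (t.1 * (r.1 * s.2) * S t.2) b =
  \sum_(t <- d h) \sum_(u <- d t.1) \sum_(k <- d u.1) \sum_(r <- R) \sum_(s <- R)
     pr (S k.1 * k.2 * (r.2 * s.1)) a * pr (u.2 * (r.1 * s.2) * S t.2) b.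
Proof.
apply: eq_bigr => t _; rewrite sum_swap22; apply: eq_bigr => r _; apply: eq_bigr => s _.
under eq_bigr => u _ do rewrite -mulr_suml -pr_suml -mulr_suml antL sAl mul1r prZl.
rewrite -{1}(counitL t.1) !mulr_suml pr_suml mulr_sumr; apply: eq_bigr => u _.
by rewrite !sAl prZl; ring.
Qed.

Lemma dec3_G a b : dec3 (fun x y z => \sum_(k <- d x) \sum_(r <- R) \sum_(s <- R)
     pr (S k.1 * (r.2 * s.1) * k.2) a * pr (r.1 * s.2 * y * S z) b).
Proof.
apply: dp3_dec.
apply: (Dp3ext (G := fun x y z => \sum_(r <- R) \sum_(s <- R) \sum_(l <- ds a) \sum_(m <- ds l.1)
     pr x (Ss m.1 * l.2) * pr (r.2 * s.1) m.2 * pr (r.1 * s.2 * y * S z) b)).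
  move=> x y z; rewrite -[LHS]sum_rot3; apply: eq_bigr => r _; apply: eq_bigr => s _.
  under eq_bigr do rewrite prM mulr_suml.
  rewrite sum_exch; apply: eq_bigr => l _.
  under eq_bigr do rewrite prM !mulr_suml.
  rewrite sum_exch; apply: eq_bigr => m _.
  rewrite prMs !mulr_suml; apply: eq_bigr => k _; rewrite prS; ring.
apply: dp3_sum => r; apply: dp3_sum => s; apply: dp3_sum => l; apply: dp3_sum => m; dp_tac.
Qed.

Ltac sums_eq := repeat (apply: eq_bigr => ? _); by rewrite ?mulrA.

Lemma D1_at h a b :
  \sum_(t <- d h) \sum_(r <- R) \sum_(s <- R) pr (r.2 * s.1) a * pr (t.1 * (r.1 * s.2) * S t.2) b =
  \sum_(t <- d h) \sum_(r <- R) \sum_(s <- R) pr (S t.1 * (r.2 * s.1) * t.2) a * pr (r.1 * s.2) b.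
Proof.
rewrite D1_E01.
transitivity (\sum_(t <- d h) \sum_(u <- d t.1) \sum_(m <- d u.2) \sum_(r <- R) \sum_(s <- R)
     pr (S u.1 * (m.1 * (r.2 * s.1))) a * pr (m.2 * (r.1 * s.2) * S t.2) b).
  apply: eq_bigr => t _.
  rewrite -(coass_d t.1 (G := fun x y z => \sum_(r <- R) \sum_(s <- R)
     pr (S x * (y * (r.2 * s.1))) a * pr (z * (r.1 * s.2) * S t.2) b)); first by sums_eq.
  by apply: dp3_dec; apply: dp3_sum => r; apply: dp3_sum => s; dp_tac.
transitivity (\sum_(t <- d h) \sum_(u <- d t.1) \sum_(m <- d u.2) \sum_(r <- R) \sum_(s <- R)
     pr (S u.1 * (r.2 * s.1 * m.1)) a * pr (r.1 * s.2 * m.2 * S t.2) b).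
  apply: eq_bigr => t _; apply: eq_bigr => u _.
  by rewrite (adQ u.2 (F := fun x y => pr (S u.1 * x) a * pr (y * S t.2) b)) //; dp_tac.
transitivity (\sum_(t <- d h) \sum_(u <- d t.1) \sum_(k <- d u.1) \sum_(r <- R) \sum_(s <- R)
     pr (S k.1 * (r.2 * s.1) * k.2) a * pr (r.1 * s.2 * u.2 * S t.2) b).
  apply: eq_bigr => t _.
  rewrite (coass_d t.1 (G := fun x y z => \sum_(r <- R) \sum_(s <- R)
     pr (S x * (r.2 * s.1) * y) a * pr (r.1 * s.2 * z * S t.2) b)); first by sums_eq.
  by apply: dp3_dec; apply: dp3_sum => r; apply: dp3_sum => s; dp_tac.
transitivity (\sum_(t <- d h) \sum_(v <- d t.2) \sum_(k <- d t.1) \sum_(r <- R) \sum_(s <- R)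
     pr (S k.1 * (r.2 * s.1) * k.2) a * pr (r.1 * s.2 * v.1 * S v.2) b).
  rewrite (coass_d h (G := fun x y z => \sum_(k <- d x) \sum_(r <- R) \sum_(s <- R)
     pr (S k.1 * (r.2 * s.1) * k.2) a * pr (r.1 * s.2 * y * S z) b)) //.
  exact: dec3_G.
transitivity (\sum_(t <- d h) e t.2 * \sum_(k <- d t.1) \sum_(r <- R) \sum_(s <- R)
     pr (S k.1 * (r.2 * s.1) * k.2) a * pr (r.1 * s.2) b).
  apply: eq_bigr => t _; rewrite sum_exch mulr_sumr; apply: eq_bigr => k _.
  rewrite sum_exch mulr_sumr; apply: eq_bigr => r _; rewrite sum_exch mulr_sumr; apply: eq_bigr => s _.
  under eq_bigr => v _ do rewrite -[r.1 * s.2 * v.1 * S v.2]mulrA.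
  rewrite -mulr_sumr -pr_suml -mulr_sumr antR sAr mulr1 prZl; ring.
rewrite -[in RHS](counitR h) (@dsum_d _ _ _ _ ( fun x y => \sum_(r <- R) \sum_(s <- R) pr (S x * (r.2 * s.1) * y) a * pr (r.1 * s.2) b)) //.
by apply: dp2_dec; apply: dp2_sum => r; apply: dp2_sum => s; dp_tac.
Qed.

Lemma D1 h : forall F, dp2 F ->
  \sum_(t <- d h) \sum_(r <- R) \sum_(s <- R) F (r.2 * s.1) (t.1 * (r.1 * s.2) * S t.2) =
  \sum_(t <- d h) \sum_(r <- R) \sum_(s <- R) F (S t.1 * (r.2 * s.1) * t.2) (r.1 * s.2).
Proof. lift2_tac => a b; exact: D1_at. Qed.

Lemma prQ x c : pr (Qmap pr R x) c = \sum_(r <- R) \sum_(s <- R) pr (r.2 * s.1) x * pr (r.1 * s.2) c.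
Proof. by rewrite /Qmap pr_dsum. Qed.

Lemma Q_lin c a b : Qmap pr R (c *: a + b) = c *: Qmap pr R a + Qmap pr R b.
Proof.
rewrite /Qmap scaler_sumr -big_split; apply: eq_bigr => r _.
rewrite scaler_sumr -big_split; apply: eq_bigr => s _.
by rewrite prDr scalerDl scalerA.
Qed.

Lemma Q_one : Qmap pr R 1 = 1.
Proof.
have -> : (1 : H) = (\sum_(r <- R) e r.2 *: r.1) * (\sum_(s <- R) e s.1 *: s.2) by rewrite v_one u_one mulr1.
rewrite /Qmap sum_mulss; apply: eq_bigr => r _; apply: eq_bigr => s _.
by rewrite pr1r emul.
Qed.

Lemma pr_umul y a b : pr y (umul XHs pr R a b) =
  \sum_(t <- R) \sum_(u <- d t.1) \sum_(v <- d y) pr (S u.1 * (v.1 * u.2)) a * pr (S t.2 * v.2) b.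
Proof.
rewrite /umul pr_sumr iterc_S.
transitivity (\sum_(p <- ds a) \sum_(p' <- ds p.2) \sum_(q <- ds b) \sum_(t <- R) \sum_(u <- d t.1) \sum_(v <- d y)
   pr (S u.1) p.1 * pr v.1 p'.1 * pr u.2 p'.2 * (pr (S t.2) q.1 * pr v.2 q.2)).
  apply: eq_bigr => p _; rewrite iterc_S; apply: eq_bigr => p' _; rewrite iterc_0 /=.
  rewrite pr_sumr; apply: eq_bigr => q _; rewrite prZr /Rform mulr_suml; apply: eq_bigr => t _.
  rewrite prMs prMs !mulr_suml; apply: eq_bigr => u _; rewrite mulr_sumr; apply: eq_bigr => v _.
  rewrite -!prS; ring.
rewrite sum_swap33; apply: eq_bigr => t _; apply: eq_bigr => u _; apply: eq_bigr => v _.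
rewrite prM prM big_distrl /=; apply: eq_bigr => p _; rewrite prM mulr_sumr mulr_suml; apply: eq_bigr => p' _.
rewrite mulr_sumr; apply: eq_bigr => q _; ring.
Qed.

Lemma pr_act y h a b : pr y (act_Hs XHs pr R h a b) =
  \sum_(k <- d h) \sum_(t <- R) \sum_(t' <- R)
     pr (t.2 * (S k.1 * (y * (k.2 * t'.1)))) b * pr (t.1 * t'.2) a.
Proof.
transitivity (\sum_(p1 <- ds b) \sum_(p2 <- ds p1.2) \sum_(p3 <- ds p2.2) \sum_(p4 <- ds p3.2)
   \sum_(m <- ds a) \sum_(k <- d h) \sum_(t <- R) \sum_(t' <- R)
   pr t.2 p1.1 * pr (S k.1) p2.1 * pr y p3.1 * pr k.2 p4.1 * pr t'.1 p4.2 * (pr t.1 m.1 * pr t'.2 m.2)).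
  rewrite /act_Hs pr_sumr iterc_S; apply: eq_bigr => p1 _; rewrite iterc_S; apply: eq_bigr => p2 _.
  rewrite iterc_S; apply: eq_bigr => p3 _; rewrite iterc_S; apply: eq_bigr => p4 _; rewrite iterc_0 /=.
  rewrite pr_sumr; apply: eq_bigr => m _; rewrite prZr prMs /Rform.
  rewrite !big_distrl /=; apply: eq_bigr => k _.
  rewrite [RHS]sum_exch big_distrr /= !big_distrl /=; apply: eq_bigr => t' _.
  rewrite big_distrr /= !big_distrl /=; apply: eq_bigr => t _.
  rewrite -!prS; ring.
symmetry.
transitivity (\sum_(k <- d h) \sum_(t <- R) \sum_(t' <- R)
   \sum_(p1 <- ds b) \sum_(p2 <- ds p1.2) \sum_(p3 <- ds p2.2) \sum_(p4 <- ds p3.2) \sum_(m <- ds a)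
   pr t.2 p1.1 * pr (S k.1) p2.1 * pr y p3.1 * pr k.2 p4.1 * pr t'.1 p4.2 * (pr t.1 m.1 * pr t'.2 m.2)).
  apply: eq_bigr => k _; apply: eq_bigr => t _; apply: eq_bigr => t' _.
  rewrite prM big_distrl /=; apply: eq_bigr => p1 _.
  rewrite prM big_distrr big_distrl /=; apply: eq_bigr => p2 _.
  rewrite prM !mulrA big_distrr big_distrl /=; apply: eq_bigr => p3 _.
  rewrite prM !mulrA big_distrr big_distrl /=; apply: eq_bigr => p4 _.
  rewrite prM big_distrr /=; apply: eq_bigr => m _; ring.
under eq_bigr => k _ do under eq_bigr => t _ do rewrite sum_in5.
under eq_bigr => k _ do rewrite sum_in5.
by rewrite sum_in5.
Qed.

Lemma Rem X b c :
  \sum_(t <- R) \sum_(u <- d t.1) \sum_(x <- R) \sum_(w <- R)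
     pr (S t.2 * x.2 * w.1) b * pr (x.1 * u.1 * X * S u.2 * w.2) c =
  \sum_(r <- R) \sum_(s <- R) pr (r.2 * s.1) b * pr (X * r.1 * s.2) c.
Proof.
rewrite (QTa_d (G := fun al be ga => \sum_(x <- R) \sum_(w <- R)
     pr (S ga * x.2 * w.1) b * pr (x.1 * al * X * S be * w.2) c)); last first.
  by apply: dp3_dec; apply: dp3_sum => x; apply: dp3_sum => w; dp_tac.
transitivity (\sum_(t' <- R) \sum_(w <- R) \sum_(x <- R) \sum_(t <- R)
   pr (S t'.2 * (S t.2 * x.2) * w.1) b * pr (x.1 * t.1 * X * S t'.1 * w.2) c).
  rewrite sum_exch; apply: eq_bigr => t' _.
  transitivity (\sum_(t <- R) \sum_(w <- R) \sum_(x <- R)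
     pr (S t'.2 * (S t.2 * x.2) * w.1) b * pr (x.1 * t.1 * X * S t'.1 * w.2) c).
    apply: eq_bigr => t _; rewrite sum_exch; apply: eq_bigr => w _; apply: eq_bigr => x _.
    by rewrite S_mul !mulrA.
  rewrite sum_exch; apply: eq_bigr => w _; by rewrite sum_exch.
transitivity (\sum_(t' <- R) \sum_(w <- R) pr (S t'.2 * w.1) b * pr (X * S t'.1 * w.2) c).
  apply: eq_bigr => t' _; apply: eq_bigr => w _.
  rewrite (Xinv (F := fun al be => pr (S t'.2 * be * w.1) b * pr (al * X * S t'.1 * w.2) c)) /=;
    last by dp_tac.
  by rewrite mulr1 mul1r.
rewrite sum_exch [RHS]sum_exch; apply: eq_bigr => w _.
by rewrite -(SSR (F := fun al be => pr (be * w.1) b * pr (X * al * w.2) c)) //; dp_tac.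
Qed.

Lemma prQQ a b c : pr (Qmap pr R a * Qmap pr R b) c =
  \sum_(z <- R) \sum_(y <- R) pr (z.2 * y.1) a *
    \sum_(r <- R) \sum_(s <- R) pr (r.2 * s.1) b * pr (z.1 * y.2 * r.1 * s.2) c.
Proof.
rewrite /Qmap big_distrl /= pr_suml; apply: eq_bigr => z _.
rewrite big_distrl /= pr_suml; apply: eq_bigr => y _.
rewrite big_distrr /= pr_suml big_distrr /=; apply: eq_bigr => r _.
rewrite big_distrr /= pr_suml big_distrr /=; apply: eq_bigr => s _.
by rewrite sAl sAr prZl prZl !mulrA.
Qed.

Lemma main_C a b : Qmap pr R (umul XHs pr R a b) = Qmap pr R a * Qmap pr R b.
Proof.
apply: eqH => c; rewrite prQ prQQ.
transitivity (\sum_(s <- R) \sum_(t <- R) \sum_(u <- d t.1) \sum_(r <- R) \sum_(v <- d (r.2 * s.1))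
   pr (S u.1 * (v.1 * u.2)) a * pr (S t.2 * v.2) b * pr (r.1 * s.2) c).
  rewrite sum_exch; apply: eq_bigr => s _.
  transitivity (\sum_(r <- R) \sum_(t <- R) \sum_(u <- d t.1) \sum_(v <- d (r.2 * s.1))
     pr (S u.1 * (v.1 * u.2)) a * pr (S t.2 * v.2) b * pr (r.1 * s.2) c).
    apply: eq_bigr => r _; rewrite pr_umul big_distrl /=; apply: eq_bigr => t _.
    rewrite big_distrl /=; apply: eq_bigr => u _; by rewrite big_distrl.
  rewrite sum_exch; apply: eq_bigr => t _; exact: sum_exch.
transitivity (\sum_(s <- R) \sum_(t <- R) \sum_(u <- d t.1) \sum_(r <- R) \sum_(f <- d r.2) \sum_(g <- d s.1)
   pr (S u.1 * (f.1 * g.1 * u.2)) a * pr (S t.2 * (f.2 * g.2)) b * pr (r.1 * s.2) c).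
  apply: eq_bigr => s _; apply: eq_bigr => t _; apply: eq_bigr => u _; apply: eq_bigr => r _.
  rewrite (@dmul_d r.2 s.1 (fun al be => pr (S u.1 * (al * u.2)) a * pr (S t.2 * be) b * pr (r.1 * s.2) c)) //.
  by d2.
transitivity (\sum_(s <- R) \sum_(t <- R) \sum_(u <- d t.1) \sum_(x <- R) \sum_(z <- R) \sum_(g <- d s.1)
   pr (S u.1 * (z.2 * g.1 * u.2)) a * pr (S t.2 * (x.2 * g.2)) b * pr (x.1 * z.1 * s.2) c).
  apply: eq_bigr => s _; apply: eq_bigr => t _; apply: eq_bigr => u _.
  rewrite (QTb_d (G := fun p q q' => \sum_(g <- d s.1)
    pr (S u.1 * (q * g.1 * u.2)) a * pr (S t.2 * (q' * g.2)) b * pr (p * s.2) c)) //.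
  by apply: dp3_dec; apply: dp3_sum => g; dp_tac.
transitivity (\sum_(t <- R) \sum_(u <- d t.1) \sum_(x <- R) \sum_(z <- R) \sum_(s <- R) \sum_(g <- d s.1)
   pr (S u.1 * (z.2 * g.1 * u.2)) a * pr (S t.2 * (x.2 * g.2)) b * pr (x.1 * z.1 * s.2) c).
  rewrite sum_exch; apply: eq_bigr => t _; rewrite sum_exch; apply: eq_bigr => u _.
  rewrite sum_exch; apply: eq_bigr => x _; exact: sum_exch.
transitivity (\sum_(t <- R) \sum_(u <- d t.1) \sum_(x <- R) \sum_(z <- R) \sum_(y <- R) \sum_(w <- R)
   pr (S u.1 * (z.2 * y.1 * u.2)) a * pr (S t.2 * (x.2 * w.1)) b * pr (x.1 * z.1 * (y.2 * w.2)) c).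
  apply: eq_bigr => t _; apply: eq_bigr => u _; apply: eq_bigr => x _; apply: eq_bigr => z _.
  rewrite (QTa_d (G := fun al be ga =>
    pr (S u.1 * (z.2 * al * u.2)) a * pr (S t.2 * (x.2 * be)) b * pr (x.1 * z.1 * ga) c)) //.
  by d3.
transitivity (\sum_(t <- R) \sum_(x <- R) \sum_(w <- R) \sum_(u <- d t.1) \sum_(z <- R) \sum_(y <- R)
   pr (S u.1 * (z.2 * y.1) * u.2) a * pr (S t.2 * (x.2 * w.1)) b * pr (x.1 * (z.1 * y.2) * w.2) c).
  apply: eq_bigr => t _; rewrite sum_exch; apply: eq_bigr => x _.
  rewrite sum_last_first3; apply: eq_bigr => w _; sums_eq.
transitivity (\sum_(t <- R) \sum_(x <- R) \sum_(w <- R) \sum_(u <- d t.1) \sum_(z <- R) \sum_(y <- R)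
   pr (z.2 * y.1) a * pr (S t.2 * (x.2 * w.1)) b * pr (x.1 * (u.1 * (z.1 * y.2) * S u.2) * w.2) c).
  apply: eq_bigr => t _; apply: eq_bigr => x _; apply: eq_bigr => w _.
  rewrite -(D1 t.1 (F := fun al be => pr al a * pr (S t.2 * (x.2 * w.1)) b * pr (x.1 * be * w.2) c)) //.
  by dp_tac.
transitivity (\sum_(z <- R) \sum_(y <- R) pr (z.2 * y.1) a *
  \sum_(t <- R) \sum_(u <- d t.1) \sum_(x <- R) \sum_(w <- R)
     pr (S t.2 * x.2 * w.1) b * pr (x.1 * u.1 * (z.1 * y.2) * S u.2 * w.2) c).
  transitivity (\sum_(t <- R) \sum_(u <- d t.1) \sum_(x <- R) \sum_(w <- R) \sum_(z <- R) \sum_(y <- R)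
     pr (z.2 * y.1) a * pr (S t.2 * (x.2 * w.1)) b * pr (x.1 * (u.1 * (z.1 * y.2) * S u.2) * w.2) c).
    by apply: eq_bigr => t _; rewrite [LHS]sum_rot3.
  transitivity (\sum_(t <- R) \sum_(u <- d t.1) \sum_(z <- R) \sum_(y <- R) \sum_(x <- R) \sum_(w <- R)
     pr (z.2 * y.1) a * pr (S t.2 * (x.2 * w.1)) b * pr (x.1 * (u.1 * (z.1 * y.2) * S u.2) * w.2) c).
    by apply: eq_bigr => t _; apply: eq_bigr => u _; rewrite sum_swap22.
  rewrite sum_swap22; apply: eq_bigr => z _; apply: eq_bigr => y _.
  rewrite big_distrr /=; apply: eq_bigr => t _; rewrite big_distrr /=; apply: eq_bigr => u _.
  rewrite big_distrr /=; apply: eq_bigr => x _; rewrite big_distrr /=; apply: eq_bigr => w _.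
  by rewrite !mulrA.
apply: eq_bigr => z _; apply: eq_bigr => y _; by rewrite Rem.
Qed.

Lemma dsumA_d I (L : seq I) (Y : I -> H) F : dec2 F ->
  \sum_(u <- d (\sum_(i <- L) Y i)) F u.1 u.2 = \sum_(i <- L) \sum_(u <- d (Y i)) F u.1 u.2.
Proof.
move=> hF; elim: L => [|i L IH]; first by rewrite !big_nil d0_d.
by rewrite !big_cons -{1}[Y i]scale1r dlin_d // mul1r IH.
Qed.
Lemma dscal_d c x F : dec2 F -> \sum_(u <- d (c *: x)) F u.1 u.2 = c * \sum_(u <- d x) F u.1 u.2.
Proof. by move=> hF; rewrite -[c *: x]addr0 dlin_d // d0_d // addr0. Qed.

Lemma main_D h a b : Qmap pr R (act_Hs XHs pr R h a b) = act_H XH pr h a (Qmap pr R b).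
Proof.
apply: eqH => c; rewrite prQ.
transitivity (\sum_(k <- d h) \sum_(r <- R) \sum_(s <- R) \sum_(t <- R) \sum_(t' <- R)
   pr (t.2 * (S k.1 * (r.2 * s.1) * k.2) * t'.1) b * pr (t.1 * t'.2) a * pr (r.1 * s.2) c).
  transitivity (\sum_(r <- R) \sum_(s <- R) \sum_(k <- d h) \sum_(t <- R) \sum_(t' <- R)
     pr (t.2 * (S k.1 * (r.2 * s.1 * (k.2 * t'.1)))) b * pr (t.1 * t'.2) a * pr (r.1 * s.2) c).
    apply: eq_bigr => r _; apply: eq_bigr => s _; rewrite pr_act big_distrl /=; apply: eq_bigr => k _.
    rewrite big_distrl /=; apply: eq_bigr => t _; by rewrite big_distrl.
  rewrite [LHS]sum_rot3; sums_eq.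
transitivity (\sum_(k <- d h) \sum_(r <- R) \sum_(s <- R) \sum_(t <- R) \sum_(t' <- R)
   pr (t.2 * (r.2 * s.1) * t'.1) b * pr (t.1 * t'.2) a * pr (k.1 * (r.1 * s.2) * S k.2) c).
  rewrite -(D1 h (F := fun al be => \sum_(t <- R) \sum_(t' <- R)
     pr (t.2 * al * t'.1) b * pr (t.1 * t'.2) a * pr be c)) //.
  by apply: dp2_sum => t; apply: dp2_sum => t'; dp_tac.
transitivity (\sum_(k <- d h) \sum_(r <- R) \sum_(s <- R) \sum_(f <- d r.1) \sum_(g <- d s.2)
   pr (r.2 * s.1) b * pr (f.1 * g.1) a * pr (k.1 * (f.2 * g.2) * S k.2) c).
  apply: eq_bigr => k _.
  transitivity (\sum_(r <- R) \sum_(s <- R) \sum_(t <- R) \sum_(t' <- R)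
     pr (t.2 * r.2 * s.1 * t'.1) b * pr (t.1 * t'.2) a * pr (k.1 * (r.1 * s.2) * S k.2) c).
    by sums_eq.
  by rewrite (D2 (F := fun x y z => pr x b * pr y a * pr (k.1 * z * S k.2) c)) //; dp_tac.
rewrite /act_H pr_dsum /Qmap.
rewrite (@dsumA_d _ _ _ (fun p1 p2 => \sum_(q <- d h) pr p1 a * pr (q.1 * p2 * S q.2) c)); last first.
  by apply: dp2_dec; apply: dp2_sum => q; dp_tac.
rewrite sum_exch; apply: eq_bigr => r _.
rewrite (@dsum_d _ _ _ _ (fun p1 p2 => \sum_(q <- d h) pr p1 a * pr (q.1 * p2 * S q.2) c)); last first.
  by apply: dp2_dec; apply: dp2_sum => q; dp_tac.
rewrite sum_exch; apply: eq_bigr => s _.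
rewrite (@dmul_d r.1 s.2 (fun p1 p2 => \sum_(q <- d h) pr p1 a * pr (q.1 * p2 * S q.2) c)); last first.
  by apply: dp2_dec; apply: dp2_sum => q; dp_tac.
rewrite sum_exch big_distrr /=; apply: eq_bigr => f _.
rewrite sum_exch big_distrr /=; apply: eq_bigr => g _.
rewrite big_distrr /=; apply: eq_bigr => k _; by rewrite !mulrA.
Qed.

Theorem main_thm :
  [/\ (forall (c : K) (a b : Hs), Qmap pr R (c *: a + b) = c *: Qmap pr R a + Qmap pr R b),
      Qmap pr R 1 = 1,
      (forall a b : Hs, Qmap pr R (umul XHs pr R a b) = Qmap pr R a * Qmap pr R b) &
      (forall (h : H) (a b : Hs),
         Qmap pr R (act_Hs XHs pr R h a b) = act_H XH pr h a (Qmap pr R b))].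
Proof. split; [exact: Q_lin | exact: Q_one | exact: main_C | exact: main_D]. Qed.
End Pf.

Theorem lemma2p1 (K : fieldType) (H Hs : algType K)
    (XH : hopf_data H) (XHs : hopf_data Hs)
    (pr : H -> Hs -> K) (R : seq (H * H)) :
  is_hopf XH -> is_hopf XHs -> is_dual_pairing XH XHs pr ->
  is_quasitriangular XH R ->
  [/\ (* Q is linear *)
      (forall (c : K) (a b : Hs), Qmap pr R (c *: a + b) = c *: Qmap pr R a + Qmap pr R b),
      (* Q is unital *)
      Qmap pr R 1 = 1,
      (* Q is multiplicative from underline(H^* ) to H *)
      (forall a b : Hs, Qmap pr R (umul XHs pr R a b) = Qmap pr R a * Qmap pr R b) &
      (* Q intertwines the D(H)-actions *)
      (forall (h : H) (a b : Hs),
         Qmap pr R (act_Hs XHs pr R h a b) = act_H XH pr h a (Qmap pr R b))].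
Proof.
move=> hH hHs hP hQ; have hQ' := hQ; case: hQ' => [[Ri hRi] _ _].
by eapply main_thm; eassumption.
Qed.
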